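(* Let $\mathcal M=(M,<,+,0,\ldots)$ be a definably complete locally o-minimal expansion of an ordered group. Let $(G,d_G)$ be a definable metric group which is definably compact, and $(X,d_X)$ a definable metric space. Suppose $G$ acts on $X$ by a definable continuous left action. Then the definable quotient space $(Q,\tau_Q)$ of $X$ by $G$ is a definable metric space, i.e. there is a definable distance function $d_Q$ on $Q$ whose induced topology is $\tau_Q$.
   Context: ''Definable'' means definable in $\mathcal M$ with parameters. $\mathcal M$ is an expansion of an ordered group with dense order without endpoints; locally o-minimal: for every definable $Y\subseteq M$ and $a\in M$ there is an open interval $I\ni a$ with $Y\cap I$ a finite union of points and open intervals; definably complete: every definable subset of $M$ has sup and inf in $M\cup\{\pm\infty\}$. A definable metric space $(X,d_X)$ is a definable set $X$ with a definable function $d_X:X\times X\to\{a\in M: a\ge 0\}$ satisfying $d_X(x,y)=0\iff x=y$, symmetry and the triangle inequality; it carries the topology with open base the balls $\{y: d_X(x,y)<\varepsilon\}$. A definable metric group is a definable metric space $(G,d_G)$ whose underlying set is a definable group such that multiplication and inversion are continuous in the induced topology. A definable topological space (definable set with a topology having a definable family as open base) is definably compact if every definable filtered family (for any two members some member lies in their intersection) of nonempty closed subsets has nonempty intersection. The definable quotient of $X$ by $G$ is a definable topological space $(Q,\tau_Q)$ with a definable continuous $\pi:X\to Q$ such that every definable continuous map from $X$ to a definable topological space that is constant on $G$-orbits factors as $\psi\circ\pi$ with $\psi$ definable continuous; it exists and is unique up to definable homeomorphism (concretely $Q$ can be a definable set meeting each orbit in one point, with $S\subseteq Q$ open iff $\pi^{-1}(S)$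 open). *)

(* Defs.v *)
(* Tuples in M^n are represented as lists of length n;
   subsets of M^n as predicates on lists. *)
From Stdlib Require Import List.
Import ListNotations.
Set Implicit Arguments.

Record ogroup (M : Type) := OGroup {
  ltM : M -> M -> Prop;
  addM : M -> M -> M;
  zeroM : M;
  oppM : M -> M }.

Section Defs.
Variables (M : Type) (O : ogroup M).
Local Notation lt := (ltM O).
Local Notation add := (addM O).
Local Notation z := (zeroM O).
Definition leM (x y : M) : Prop := lt x y \/ x = y.

Definition dense_ordered_group : Prop :=
  (forall x, ~ lt x x) /\
  (forall x y w, lt x y -> lt y w -> lt x w) /\
  (forall x y, lt x y \/ x = y \/ lt y x) /\
  (forall x y w, add x (add y w) = add (add x y) w) /\
  (forall x y, add x y = add y x) /\
  (forall x, add z x = x) /\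
  (forall x, add (oppM O x) x = z) /\
  (forall x y w, lt x y -> lt (add x w) (add y w)) /\
  (forall x y, lt x y -> exists w, lt x w /\ lt w y) /\
  (forall x, exists y w, lt y x /\ lt x w).

(* D n A : "A (a subset of M^n) is definable (with parameters)".  The axioms
   below say that D is the collection of definable sets of an expansion of
   (M,<,+,0) with all parameters from M (van den Dries' notion of a structure
   on M, containing all points, the order and the graph of +). *)
Definition is_structure (D : nat -> (list M -> Prop) -> Prop) : Prop :=
  (forall n A, D n A -> forall s, A s -> length s = n) /\
  (forall n A B, D n A -> (forall s, A s <-> B s) -> D n B) /\
  (forall n, D n (fun s => length s = n)) /\
  (forall n A B, D n A -> D n B -> D n (fun s => A s \/ B s)) /\
  (forall n A, D n A -> D n (fun s => length s = n /\ ~ A s)) /\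
  (forall n A, D n A -> D (S n) (fun s => length s = S n /\ A (firstn n s))) /\
  (forall n A, D n A -> D (S n) (fun s => length s = S n /\ A (tl s))) /\
  (forall n i j, i < n -> j < n ->
      D n (fun s => length s = n /\ nth i s z = nth j s z)) /\
  (forall n A, D (S n) A -> D n (fun s => exists x, A (s ++ [x]))) /\
  (forall a, D 1 (fun s => s = [a])) /\
  (D 2 (fun s => exists x y, s = [x; y] /\ lt x y)) /\
  (D 3 (fun s => exists x y, s = [x; y; add x y])).

Variable D : nat -> (list M -> Prop) -> Prop.

Definition locally_o_minimal : Prop :=
  forall Y, D 1 Y -> forall a, exists b c, lt b a /\ lt a c /\
    exists (ps : list M) (iv : list (M * M)), forall x,
      (lt b x /\ lt x c /\ Y [x]) <->
      (In x ps \/ exists p, In p iv /\ lt (fst p) x /\ lt x (snd p)).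

Inductive ext := ENinf | EFin (x : M) | EPinf.
Definition ele (u v : ext) : Prop :=
  match u, v with
  | ENinf, _ => True
  | _, EPinf => True
  | EFin x, EFin y => leM x y
  | _, _ => False
  end.
Definition is_sup (Y : list M -> Prop) (s : ext) : Prop :=
  (forall y, Y [y] -> ele (EFin y) s) /\
  (forall u, (forall y, Y [y] -> ele (EFin y) u) -> ele s u).
Definition is_inf (Y : list M -> Prop) (s : ext) : Prop :=
  (forall y, Y [y] -> ele s (EFin y)) /\
  (forall u, (forall y, Y [y] -> ele u (EFin y)) -> ele u s).

Definition definably_complete : Prop :=
  forall Y, D 1 Y -> (exists s, is_sup Y s) /\ (exists i, is_inf Y i).

Definition def_fun (n k : nat) (X : list M -> Prop) (f : list M -> list M) : Prop :=
  D (n + k) (fun s => X (firstn n s) /\ skipn n s = f (firstn n s)).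

Definition def_fun2 (n m k : nat) (X Y : list M -> Prop)
    (f : list M -> list M -> list M) : Prop :=
  D (n + m + k) (fun s => X (firstn n s) /\ Y (firstn m (skipn n s)) /\
      skipn (n + m) s = f (firstn n s) (firstn m (skipn n s))).

Definition is_metric (X : list M -> Prop) (d : list M -> list M -> M) : Prop :=
  forall x y w, X x -> X y -> X w ->
    leM z (d x y) /\ (d x y = z <-> x = y) /\ d x y = d y x /\
    leM (d x w) (add (d x y) (d y w)).

Definition definable_metric_space (n : nat) (X : list M -> Prop)
    (d : list M -> list M -> M) : Prop :=
  D n X /\ def_fun2 n n 1 X X (fun x y => [d x y]) /\ is_metric X d.

Definition mopen (X : list M -> Prop) (d : list M -> list M -> M)
    (S : list M -> Prop) : Prop :=
  (forall x, S x -> X x) /\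
  forall x, S x -> exists e, lt z e /\ forall y, X y -> lt (d x y) e -> S y.

(* definable topological space: Q in M^k with a definable family
   {B t : T t}, T in M^l, as open base *)
Definition def_top_space (k : nat) (Q : list M -> Prop) (l : nat)
    (T : list M -> Prop) (B : list M -> list M -> Prop) : Prop :=
  D k Q /\ D l T /\ D (l + k) (fun s => T (firstn l s) /\ B (firstn l s) (skipn l s)) /\
  (forall t q, T t -> B t q -> Q q) /\
  (forall q, Q q -> exists t, T t /\ B t q) /\
  (forall t1 t2 q, T t1 -> T t2 -> B t1 q -> B t2 q ->
     exists t3, T t3 /\ B t3 q /\ forall q', B t3 q' -> B t1 q' /\ B t2 q').

Definition topen (Q : list M -> Prop) (T : list M -> Prop)
    (B : list M -> list M -> Prop) (S : list M -> Prop) : Prop :=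
  (forall q, S q -> Q q) /\
  forall q, S q -> exists t, T t /\ B t q /\ forall q', B t q' -> S q'.

Definition cont_metric_top (X : list M -> Prop) (dX : list M -> list M -> M)
    (T : list M -> Prop) (B : list M -> list M -> Prop) (f : list M -> list M) : Prop :=
  forall x t, X x -> T t -> B t (f x) ->
    exists e, lt z e /\ forall y, X y -> lt (dX x y) e -> B t (f y).

Definition cont_top_top (Q : list M -> Prop) (TQ : list M -> Prop)
    (BQ : list M -> list M -> Prop) (T : list M -> Prop)
    (B : list M -> list M -> Prop) (f : list M -> list M) : Prop :=
  forall q t, Q q -> T t -> B t (f q) ->
    exists t', TQ t' /\ BQ t' q /\ forall q', BQ t' q' -> B t (f q').

Definition definable_metric_group (m : nat) (G : list M -> Prop)
    (dG : list M -> list M -> M) (mul : list M -> list M -> list M)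
    (inv : list M -> list M) (e : list M) : Prop :=
  definable_metric_space m G dG /\
  def_fun2 m m m G G mul /\ def_fun m m G inv /\
  G e /\
  (forall g h, G g -> G h -> G (mul g h)) /\
  (forall g, G g -> G (inv g)) /\
  (forall g h w, G g -> G h -> G w -> mul g (mul h w) = mul (mul g h) w) /\
  (forall g, G g -> mul e g = g /\ mul g e = g) /\
  (forall g, G g -> mul (inv g) g = e /\ mul g (inv g) = e) /\
  (forall g h eps, G g -> G h -> lt z eps -> exists del, lt z del /\
     forall g' h', G g' -> G h' -> lt (dG g g') del -> lt (dG h h') del ->
       lt (dG (mul g h) (mul g' h')) eps) /\
  (forall g eps, G g -> lt z eps -> exists del, lt z del /\
     forall g', G g' -> lt (dG g g') del -> lt (dG (inv g) (inv g')) eps).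

Definition definably_compact_metric (m : nat) (G : list M -> Prop)
    (dG : list M -> list M -> M) : Prop :=
  forall (l : nat) (T : list M -> Prop) (C : list M -> list M -> Prop),
    D l T ->
    D (l + m) (fun s => T (firstn l s) /\ C (firstn l s) (skipn l s)) ->
    (forall t g, T t -> C t g -> G g) ->
    (forall t, T t -> exists g, C t g) ->
    (forall t, T t -> forall g, G g -> ~ C t g ->
       exists eps, lt z eps /\ forall g', G g' -> lt (dG g g') eps -> ~ C t g') ->
    (forall t1 t2, T t1 -> T t2 ->
       exists t3, T t3 /\ forall g, C t3 g -> C t1 g /\ C t2 g) ->
    exists g, G g /\ forall t, T t -> C t g.

Definition definable_cont_action (m : nat) (G : list M -> Prop)
    (dG : list M -> list M -> M) (mul : list M -> list M -> list M) (e : list M)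
    (n : nat) (X : list M -> Prop) (dX : list M -> list M -> M)
    (act : list M -> list M -> list M) : Prop :=
  def_fun2 m n n G X act /\
  (forall g x, G g -> X x -> X (act g x)) /\
  (forall x, X x -> act e x = x) /\
  (forall g h x, G g -> G h -> X x -> act (mul g h) x = act g (act h x)) /\
  (forall g x eps, G g -> X x -> lt z eps -> exists del, lt z del /\
     forall g' x', G g' -> X x' -> lt (dG g g') del -> lt (dX x x') del ->
       lt (dX (act g x) (act g' x')) eps).

Definition is_definable_quotient (m : nat) (G : list M -> Prop)
    (n : nat) (X : list M -> Prop) (dX : list M -> list M -> M)
    (act : list M -> list M -> list M)
    (k : nat) (Q : list M -> Prop) (l : nat) (TQ : list M -> Prop)
    (BQ : list M -> list M -> Prop) (pi : list M -> list M) : Prop :=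
  def_top_space k Q l TQ BQ /\
  def_fun n k X pi /\
  (forall x, X x -> Q (pi x)) /\
  (forall q, Q q -> exists x, X x /\ pi x = q) /\
  (forall g x, G g -> X x -> pi (act g x) = pi x) /\
  cont_metric_top X dX TQ BQ pi /\
  (forall (k' : nat) (Y : list M -> Prop) (l' : nat) (T : list M -> Prop)
          (B : list M -> list M -> Prop) (f : list M -> list M),
     def_top_space k' Y l' T B ->
     def_fun n k' X f ->
     (forall x, X x -> Y (f x)) ->
     cont_metric_top X dX T B f ->
     (forall g x, G g -> X x -> f (act g x) = f x) ->
     exists psi : list M -> list M,
       def_fun k k' Q psi /\ (forall q, Q q -> Y (psi q)) /\
       cont_top_top Q TQ BQ T B psi /\
       (forall x, X x -> f x = psi (pi x))).

End Defs.

(* Main.v *)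
Require Import Defs.
From Stdlib Require Import List Lia Classical ClassicalEpsilon PeanoNat Arith.
Import ListNotations.

Section Defn.
Variable M : Type.
Variable O : ogroup M.
Variable D : nat -> (list M -> Prop) -> Prop.
Hypothesis HD : is_structure O D.
Local Notation z := (zeroM O).

Lemma D_len n A s : D n A -> A s -> length s = n.
Proof. destruct HD as [h _]; eauto. Qed.
Lemma D_ext n A B : D n A -> (forall s, A s <-> B s) -> D n B.
Proof. destruct HD as [_ [h _]]; eauto. Qed.

Definition Def n (P : list M -> Prop) := D n (fun s => length s = n /\ P s).

Lemma Def_D n A : D n A -> Def n A.
Proof. intro h. eapply D_ext; [exact h|]. intro s; split; [intro a; split; eauto using D_len|tauto]. Qed.
Lemma D_Def n P A : Def n P -> (forall s, length s = n -> (P s <-> A s)) -> (forall s, A s -> length s = n) -> D n A.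
Proof. intros h e l. eapply D_ext; [exact h|]. intro s; split.
  intros [a b]; now apply e. intro a; split; [auto|]. apply e; auto. Qed.
Lemma Def_ext n P P' : Def n P -> (forall s, length s = n -> (P s <-> P' s)) -> Def n P'.
Proof. intros h e. eapply D_ext; [exact h|]. intro s; split; intros [a b]; split; auto; apply e; auto. Qed.
Lemma Def_cast n n' P : n = n' -> Def n P -> Def n' P.
Proof. now intros ->. Qed.
Lemma Def_true n : Def n (fun _ => True).
Proof. destruct HD as [_ [_ [h _]]]. eapply D_ext; [apply h|]. tauto. Qed.
Lemma Def_not n P : Def n P -> Def n (fun s => ~ P s).
Proof. intro h. destruct HD as [_ [_ [_ [_ [hc _]]]]]. eapply D_ext; [apply hc, h|]. intro s; cbv beta; tauto. Qed.
Lemma Def_or n P P' : Def n P -> Def n P' -> Def n (fun s => P s \/ P' s).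
Proof. intros h h'. destruct HD as [_ [_ [_ [hu _]]]]. eapply D_ext; [apply hu; [exact h|exact h']|]. intro s; cbv beta; tauto. Qed.
Lemma Def_and n P P' : Def n P -> Def n P' -> Def n (fun s => P s /\ P' s).
Proof. intros h h'. eapply Def_ext. apply Def_not, Def_or; [apply Def_not, h | apply Def_not, h'].
  intros s _; cbv beta; split; [intro a; split; apply NNPP; tauto | tauto]. Qed.
Lemma Def_ex n P : Def (S n) P -> Def n (fun s => exists x, P (s ++ [x])).
Proof. intro h. destruct HD as [_ [_ [_ [_ [_ [_ [_ [_ [hp _]]]]]]]]].
  eapply D_ext; [apply hp, h|]. intro s; split.
  intros [x [a b]]. rewrite length_app in a; simpl in a. split; [lia| eauto].
  intros [a [x b]]. exists x; split; auto. rewrite length_app; simpl; lia. Qed.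
Lemma Def_exs n j P : Def (n + j) P -> Def n (fun s => exists y, length y = j /\ P (s ++ y)).
Proof.
  revert n P; induction j as [|j IH]; intros n P h.
  - rewrite Nat.add_0_r in h. eapply Def_ext; [exact h|]. intros s _; split.
    intro a; exists []; rewrite app_nil_r; auto. intros [y [a b]]. destruct y; [|discriminate]. now rewrite app_nil_r in b.
  - replace (n + S j) with (S (n + j)) in h by lia. apply Def_ex in h. apply IH in h.
    eapply Def_ext; [exact h|]. intros s _; split.
    intros [y [a [x b]]]. exists (y ++ [x]). rewrite length_app, a, app_assoc; simpl; split; auto; lia.
    intros [y [a b]]. destruct (@exists_last _ y) as [y' [x e]]. destruct y; simpl in a; [lia|discriminate].
    subst y. exists y'. rewrite length_app in a; simpl in a. split; [lia|]. exists x. now rewrite <- app_assoc.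
Qed.
Lemma Def_all n j P : Def (n + j) P -> Def n (fun s => forall y, length y = j -> P (s ++ y)).
Proof. intro h. eapply Def_ext. apply Def_not, Def_exs, Def_not, h.
  intros s _; split. intros a y l. apply NNPP; intro b; apply a; eauto. intros a [y [l b]]; eauto. Qed.

Lemma Def_skip j m A : Def m A -> Def (j + m) (fun s => A (skipn j s)).
Proof.
  induction j as [|j IH]; intro h; [exact h|].
  destruct HD as [_ [_ [_ [_ [_ [_ [ht _]]]]]]].
  eapply D_ext; [apply ht, IH, h|]. intro s; split.
  - intros [a [b c]]. split; auto. destruct s; simpl in *; [lia|auto].
  - intros [a b]. split; auto. destruct s; simpl in *; [lia|split; [lia|auto]].
Qed.
Lemma Def_first n j A : Def n A -> Def (n + j) (fun s => A (firstn n s)).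
Proof.
  induction j as [|j IH]; intro h.
  - rewrite Nat.add_0_r. eapply Def_ext; [exact h|]. intros s l; rewrite <- l, firstn_all; tauto.
  - destruct HD as [_ [_ [_ [_ [_ [hf _]]]]]].
    replace (n + S j) with (S (n + j)) by lia.
    eapply D_ext; [apply hf, IH, h|]. intro s; cbv beta. rewrite firstn_firstn; split.
    + intros [a [b c]]. split; auto. now replace (Nat.min n (n + j)) with n in c by lia.
    + intros [a b]. split; auto. rewrite length_firstn. split; [lia|]. now replace (Nat.min n (n + j)) with n by lia.
Qed.
Lemma Def_block a m n A : Def m A -> a + m <= n -> Def n (fun s => A (firstn m (skipn a s))).
Proof.
  intros h l. apply (Def_skip a) in h. apply (Def_first _ (n - (a + m))) in h.
  replace (a + m + (n - (a + m))) with n in h by lia.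
  eapply Def_ext; [exact h|]. intros s _; cbv beta. rewrite skipn_firstn_comm. now replace (a + m - a) with m by lia.
Qed.
Lemma Def_diag n i j : i < n -> j < n -> Def n (fun s => nth i s z = nth j s z).
Proof. intros hi hj; destruct HD as [_ [_ [_ [_ [_ [_ [_ [h _]]]]]]]]. exact (h n i j hi hj). Qed.

Lemma Def_pt a : Def 1 (fun s => s = [a]).
Proof. destruct HD as [_ [_ [_ [_ [_ [_ [_ [_ [_ [h _]]]]]]]]]]. apply Def_D, h. Qed.
Lemma first1_skip (s : list M) i : i < length s -> firstn 1 (skipn i s) = [nth i s z].
Proof. revert s; induction i; intros [|x s] l; simpl in *; try lia. now destruct s. apply IHi; lia. Qed.
Lemma Def_cst n i a : i < n -> Def n (fun s => nth i s z = a).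
Proof. intro l. eapply Def_ext; [apply (Def_block i 1 n); [apply (Def_pt a)|lia]|].
  intros s ls; cbv beta. rewrite first1_skip by lia. split; intro e; [now inversion e| now rewrite e]. Qed.
Lemma Def_lt2 : Def 2 (fun s => exists x y, s = [x; y] /\ ltM O x y).
Proof. destruct HD as [_ [_ [_ [_ [_ [_ [_ [_ [_ [_ [h _]]]]]]]]]]]. apply Def_D, h. Qed.
Lemma Def_add3 : Def 3 (fun s => exists x y, s = [x; y; addM O x y]).
Proof. destruct HD as [_ [_ [_ [_ [_ [_ [_ [_ [_ [_ [_ h]]]]]]]]]]]. apply Def_D, h. Qed.
Lemma Def_eq2 : Def 2 (fun s => exists x, s = [x; x]).
Proof. eapply Def_ext; [apply (Def_diag 2 0 1); lia|]. intros s l.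
  destruct s as [|a [|b [|c s]]]; simpl in *; try lia. split; [intros ->; eauto|intros [x e]; congruence]. Qed.

Lemma Def_allidx N m P : (forall j, j < m -> Def N (P j)) -> Def N (fun s => forall j, j < m -> P j s).
Proof.
  induction m as [|m IH]; intro h.
  - eapply Def_ext; [apply Def_true|]. intros; split; intros; auto; lia.
  - eapply Def_ext; [apply Def_and; [apply IH; intros; apply h; lia| apply (h m); lia]|].
    intros s _; split. intros [a b] j l. destruct (Nat.eq_dec j m); [subst; auto| apply a; lia].
    intro a; split; auto.
Qed.

Lemma skipn_app_ex (s y : list M) n : length s = n -> skipn n (s ++ y) = y.
Proof. intros <-. rewrite skipn_app, skipn_all, Nat.sub_diag. auto. Qed.
Lemma firstn_app_ex (s y : list M) n : length s = n -> firstn n (s ++ y) = s.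
Proof. intros <-. rewrite firstn_app, firstn_all, Nat.sub_diag, app_nil_r. auto. Qed.

Definition ev (s : list M) (t : nat + M) : M := match t with inl i => nth i s z | inr a => a end.

Lemma Def_subst n m A (tau : list (nat + M)) : Def m A -> length tau = m ->
  (forall i, In (inl i) tau -> i < n) -> Def n (fun s => A (map (ev s) tau)).
Proof.
  intros hA hl hv.
  assert (E : Def (n + m) (fun u => A (skipn n u) /\ forall j, j < m -> nth (n + j) u z = ev u (nth j tau (inr z)))).
  { apply Def_and. replace (n + m) with (n + m) by lia. apply Def_skip, hA.
    apply Def_allidx. intros j lj. destruct (nth j tau (inr z)) as [i|a] eqn:ej; simpl.
    - apply Def_diag; [lia|]. assert (In (inl i) tau) by (rewrite <- ej; apply nth_In; lia). specialize (hv _ H); lia.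
    - apply Def_cst; lia. }
  apply Def_exs in E. eapply Def_ext; [exact E|]. intros s ls; split.
  - intros [y [ly [a b]]]. rewrite skipn_app_ex in a by lia.
    replace y with (map (ev s) tau) in a; auto.
    apply nth_ext with (d := z) (d' := z). rewrite length_map; lia.
    intros j lj. rewrite length_map in lj. specialize (b j ltac:(lia)).
    rewrite app_nth2 in b by lia. replace (n + j - length s) with j in b by lia. rewrite b.
    rewrite nth_indep with (d' := ev s (inr z)) by (rewrite length_map; lia). rewrite map_nth.
    destruct (nth j tau (inr z)) as [i|a'] eqn:ej; simpl; auto.
    rewrite app_nth1; auto. assert (In (inl i) tau) by (rewrite <- ej; apply nth_In; lia). specialize (hv _ H); lia.
  - intro a. exists (map (ev s) tau). rewrite length_map. split; auto. split.
    rewrite skipn_app_ex by lia. exact a.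
    intros j lj. rewrite app_nth2 by lia. replace (n + j - length s) with j by lia.
    rewrite nth_indep with (d' := ev s (inr z)) by (rewrite length_map; lia). rewrite map_nth.
    destruct (nth j tau (inr z)) as [i|a'] eqn:ej; simpl; auto.
    rewrite app_nth1; auto. assert (In (inl i) tau) by (rewrite <- ej; apply nth_In; lia). specialize (hv _ H); lia.
Qed.

Inductive tm := TV (i : nat) | TC (l : list M).
Inductive fm := FRel (R : list M -> Prop) (ts : list tm) | FNot (F : fm) | FAnd (F G : fm)
  | FOr (F G : fm) | FEx (j : nat) (F : fm) | FTrue.

Fixpoint sumn (ns : list nat) := match ns with [] => 0 | j :: r => j + sumn r end.
Definition offs (ns : list nat) i := sumn (firstn i ns).
Definition tsz (ns : list nat) t := match t with TV i => nth i ns 0 | TC l => length l end.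
Definition tpos (ns : list nat) t : list (nat + M) := match t with TV i => map inl (seq (offs ns i) (nth i ns 0)) | TC l => map inr l end.
Definition tev (env : list (list M)) t := match t with TV i => nth i env [] | TC l => l end.
Definition tok (ns : list nat) t := match t with TV i => i < length ns | TC _ => True end.

Fixpoint wf (ns : list nat) (F : fm) : Prop :=
  match F with
  | FRel R ts => Def (sumn (map (tsz ns) ts)) R /\ Forall (tok ns) ts
  | FNot F => wf ns F
  | FAnd F G => wf ns F /\ wf ns G
  | FOr F G => wf ns F /\ wf ns G
  | FEx j F => wf (ns ++ [j]) F
  | FTrue => True
  end.
Fixpoint sem (env : list (list M)) (F : fm) : Prop :=
  match F with
  | FRel R ts => R (concat (map (tev env) ts))
  | FNot F => ~ sem env F
  | FAnd F G => sem env F /\ sem env G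
  | FOr F G => sem env F \/ sem env G
  | FEx j F => exists y, length y = j /\ sem (env ++ [y]) F
  | FTrue => True
  end.
Fixpoint unflat (ns : list nat) (s : list M) : list (list M) :=
  match ns with [] => [] | j :: r => firstn j s :: unflat r (skipn j s) end.

Lemma sumn_app a b : sumn (a ++ b) = sumn a + sumn b.
Proof. induction a; simpl; lia. Qed.
Lemma unflat_app ns j s y : length s = sumn ns -> length y = j -> unflat (ns ++ [j]) (s ++ y) = unflat ns s ++ [y].
Proof.
  revert s; induction ns as [|a ns IH]; intros s ls ly; simpl in *.
  - destruct s; [|simpl in ls; lia]. simpl. rewrite <- ly, firstn_all. auto.
  - rewrite firstn_app. replace (a - length s) with 0 by lia. rewrite firstn_O, app_nil_r.
    rewrite skipn_app. replace (a - length s) with 0 by lia. rewrite skipn_O.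
    rewrite IH; auto. rewrite length_skipn; lia.
Qed.
Lemma nth_unflat ns s i : length s = sumn ns -> i < length ns ->
  nth i (unflat ns s) [] = firstn (nth i ns 0) (skipn (offs ns i) s).
Proof.
  unfold offs. revert s i; induction ns as [|a ns IH]; intros s i ls li; simpl in *; [lia|].
  destruct i; simpl; auto. rewrite IH; [|rewrite length_skipn; lia|lia]. now rewrite skipn_skipn, Nat.add_comm.
Qed.
Lemma map_seq_nth s a b : a + b <= length s -> map (fun p => nth p s z) (seq a b) = firstn b (skipn a s).
Proof.
  revert a; induction b as [|b IH]; intros a l; [reflexivity|].
  change (map (fun p => nth p s z) (seq a (S b))) with (nth a s z :: map (fun p => nth p s z) (seq (S a) b)).
  rewrite IH by lia. destruct (skipn a s) eqn:e.
  - assert (length (skipn a s) = length s - a) by apply length_skipn. rewrite e in H; simpl in H; lia.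
  - assert (H : skipn (S a) s = l0). { change (S a) with (1 + a). rewrite <- skipn_skipn, e. reflexivity. }
    rewrite H. change (firstn (S b) (m :: l0)) with (m :: firstn b l0). f_equal.
    rewrite <- (firstn_skipn a s) at 1. rewrite app_nth2; rewrite length_firstn; [|lia]. replace (a - Nat.min a (length s)) with 0 by lia. now rewrite e.
Qed.
Lemma offs_bound ns i : i < length ns -> offs ns i + nth i ns 0 <= sumn ns.
Proof. unfold offs; revert i; induction ns; intros [|i] l; simpl in *; try lia. specialize (IHns i ltac:(lia)). lia. Qed.

Lemma length_concat' (l : list (list (nat + M))) : length (concat l) = sumn (map (@length _) l).
Proof. induction l; simpl; auto. rewrite length_app; lia. Qed.

Theorem fm_def F : forall ns, wf ns F -> Def (sumn ns) (fun s => sem (unflat ns s) F).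
Proof.
  induction F as [R ts|F IH|F IHF G IHG|F IHF G IHG|j F IH|]; intros ns w; simpl in *.
  - destruct w as [hR hts].
    eapply Def_ext. apply (Def_subst (sumn ns) _ R (concat (map (tpos ns) ts)) hR).
    + rewrite length_concat', map_map. f_equal. apply map_ext. intros [i|l]; simpl; rewrite length_map; auto. apply length_seq.
    + intros i hi. apply in_concat in hi. destruct hi as [l [h1 h2]]. apply in_map_iff in h1. destruct h1 as [t [<- h3]].
      rewrite Forall_forall in hts. specialize (hts t h3). destruct t as [i'|l']; simpl in *.
      * apply in_map_iff in h2. destruct h2 as [p [e h4]]. inversion e; subst. apply in_seq in h4.
        pose proof (offs_bound ns i' hts). lia.
      * apply in_map_iff in h2. destruct h2 as [p [e _]]. discriminate.
    + intros s ls; cbv beta. rewrite concat_map, map_map. replace (map (fun x => map (ev s) (tpos ns x)) ts) with (map (tev (unflat ns s)) ts). tauto.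
      apply map_ext_in. intros t ht. rewrite Forall_forall in hts. specialize (hts t ht). destruct t as [i|l]; simpl in *.
      * rewrite nth_unflat by auto. rewrite map_map. simpl. rewrite map_seq_nth; auto. pose proof (offs_bound ns i hts). lia.
      * rewrite map_map; simpl. now rewrite map_id.
  - apply Def_not; auto.
  - apply Def_and; intuition.
  - apply Def_or; intuition.
  - specialize (IH _ w). rewrite sumn_app in IH. simpl in IH. rewrite Nat.add_0_r in IH.
    apply Def_exs in IH. eapply Def_ext; [exact IH|]. intros s ls; split; intros [y [ly h]]; exists y; split; auto.
    rewrite unflat_app in h; auto. rewrite unflat_app; auto.
  - apply Def_true.
Qed.


Lemma Def_cast' n n' P : Def n P -> n = n' -> Def n' P.
Proof. now intros h <-. Qed.

Definition Rb (P : list (list M) -> Prop) (ls : list nat) (s : list M) :=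
  exists env, map (@length M) env = ls /\ s = concat env /\ P env.

Lemma unflat_concat env ls : map (@length M) env = ls -> unflat ls (concat env) = env.
Proof. revert ls; induction env as [|x env IH]; intros ls h; subst ls; simpl; auto.
  rewrite firstn_app_ex, skipn_app_ex by auto. f_equal; auto. Qed.
Lemma concat_unflat ls s : length s = sumn ls -> concat (unflat ls s) = s.
Proof. revert s; induction ls as [|a ls IH]; intros s h; simpl in *.
  destruct s; simpl in *; auto; lia.
  rewrite IH. apply firstn_skipn. rewrite length_skipn; lia. Qed.
Lemma map_length_unflat ls s : length s = sumn ls -> map (@length M) (unflat ls s) = ls.
Proof. revert s; induction ls as [|a ls IH]; intros s h; simpl in *; auto.
  rewrite IH, length_firstn. f_equal; lia. rewrite length_skipn; lia. Qed.
Lemma Rb_concat P ls L : map (@length M) L = ls -> (Rb P ls (concat L) <-> P L).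
Proof. intro h; split.
  - intros [env [h1 [h2 h3]]]. assert (env = L). { rewrite <- (unflat_concat env ls h1), <- h2. now apply unflat_concat. } now subst.
  - intro p; exists L; auto. Qed.
Lemma Rb_len P ls s : Rb P ls s -> length s = sumn ls.
Proof. intros [env [h1 [h2 _]]]. subst s ls. induction env; simpl; auto.
  rewrite length_app. lia. Qed.
Lemma Def_Rb P ls F : wf ls F -> (forall env, map (@length M) env = ls -> (sem env F <-> P env)) -> Def (sumn ls) (Rb P ls).
Proof.
  intros w h. eapply Def_ext; [apply (fm_def F ls w)|]. intros s ls'. cbv beta.
  rewrite <- (concat_unflat ls s) at 2 by auto. rewrite Rb_concat by (apply map_length_unflat; auto).
  apply h. apply map_length_unflat; auto.
Qed.
Lemma Rb_of_D ls A P : D (sumn ls) A -> (forall env, map (@length M) env = ls -> (A (concat env) <-> P env)) -> Def (sumn ls) (Rb P ls).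
Proof.
  intros hA h. apply Def_D in hA. eapply Def_ext; [exact hA|]. intros s l. cbv beta.
  rewrite <- (concat_unflat ls s) by auto. rewrite Rb_concat by (apply map_length_unflat; auto).
  apply h. apply map_length_unflat; auto.
Qed.
Lemma D_of_Rb ls A P : Def (sumn ls) (Rb P ls) -> (forall env, map (@length M) env = ls -> (P env <-> A (concat env))) ->
  (forall s, A s -> length s = sumn ls) -> D (sumn ls) A.
Proof.
  intros hP h hl. eapply D_Def; [exact hP| |exact hl]. intros s l.
  rewrite <- (concat_unflat ls s) by auto. rewrite Rb_concat by (apply map_length_unflat; auto).
  apply h. apply map_length_unflat; auto.
Qed.

Definition FAll j F := FNot (FEx j (FNot F)).
Definition FImp F G := FOr (FNot F) G.
Lemma sem_FAll env j F : sem env (FAll j F) <-> forall y, length y = j -> sem (env ++ [y]) F.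
Proof. simpl. split. intros h y l. apply NNPP; intro a; apply h; eauto. intros h [y [l a]]; apply a; auto. Qed.
Lemma sem_FImp env F G : sem env (FImp F G) <-> (sem env F -> sem env G).
Proof. simpl. tauto. Qed.
Lemma wf_FAll ns j F : wf (ns ++ [j]) F -> wf ns (FAll j F).
Proof. simpl; auto. Qed.
Lemma wf_FImp ns F G : wf ns F -> wf ns G -> wf ns (FImp F G).
Proof. simpl; auto. Qed.

Lemma len1 (y : list M) : length y = 1 -> exists v, y = [v].
Proof. destruct y as [|v [|w y]]; simpl; intro h; try lia; eauto. Qed.
End Defn.


Section Main.
Variable M : Type.
Variable O : ogroup M.
Variable D : nat -> (list M -> Prop) -> Prop.
Hypothesis HO : dense_ordered_group O.
Hypothesis HD : is_structure O D.
Hypothesis Hdc : definably_complete O D.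
Variables (m : nat) (G : list M -> Prop) (dG : list M -> list M -> M)
  (mul : list M -> list M -> list M) (inv : list M -> list M) (e : list M).
Hypothesis HG : definable_metric_group O D m G dG mul inv e.
Hypothesis HGc : definably_compact_metric O D m G dG.
Variables (n : nat) (X : list M -> Prop) (dX : list M -> list M -> M).
Hypothesis HX : definable_metric_space O D n X dX.
Variable act : list M -> list M -> list M.
Hypothesis Hact : definable_cont_action O D m G dG mul e n X dX act.
Variables (k : nat) (Q : list M -> Prop) (l : nat) (TQ : list M -> Prop)
  (BQ : list M -> list M -> Prop) (pi : list M -> list M).
Hypothesis HQ : is_definable_quotient O D m G n X dX act k Q l TQ BQ pi.

Local Notation "a <' b" := (ltM O a b) (at level 70).
Local Notation "a <=' b" := (leM O a b) (at level 70).
Local Notation "a +' b" := (addM O a b) (at level 50, left associativity).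
Local Notation z := (zeroM O).
Local Notation "-' a" := (oppM O a) (at level 35).
Local Notation Def := (Def M D).
Local Notation Def_cast' := (Def_cast' M D).
Local Notation Rb := (Rb M).
Local Notation FRel := (@FRel M).
Local Notation TV := (@TV M).
Local Notation TC := (@TC M).
Local Notation FAnd := (@FAnd M).
Local Notation FOr := (@FOr M).
Local Notation FNot := (@FNot M).
Local Notation FEx := (@FEx M).
Local Notation FAll j F := (FNot (FEx j (FNot F))).
Local Notation FImp F G := (FOr (FNot F) G).
Local Notation sem := (@sem M).
Local Notation wf := (@wf M D).
Local Notation Def_Rb := (Def_Rb M O D HD).
Local Notation Rb_of_D := (Rb_of_D M O D HD).
Local Notation D_of_Rb := (D_of_Rb M O D HD).
Local Notation D_len := (D_len M O D HD).
Local Notation Def_D := (Def_D M O D HD).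

Lemma lt_irr x : ~ x <' x. Proof. destruct HO as [h _]; apply h. Qed.
Lemma lt_trans x y w : x <' y -> y <' w -> x <' w.
Proof. destruct HO as [_ [h _]]; apply h. Qed.
Lemma lt_tri x y : x <' y \/ x = y \/ y <' x.
Proof. destruct HO as [_ [_ [h _]]]; apply h. Qed.
Lemma add_assoc x y w : x +' (y +' w) = x +' y +' w.
Proof. destruct HO as [_ [_ [_ [h _]]]]; apply h. Qed.
Lemma add_comm x y : x +' y = y +' x.
Proof. destruct HO as [_ [_ [_ [_ [h _]]]]]; apply h. Qed.
Lemma add_0l x : z +' x = x.
Proof. destruct HO as [_ [_ [_ [_ [_ [h _]]]]]]; apply h. Qed.
Lemma add_oppl x : -' x +' x = z.
Proof. destruct HO as [_ [_ [_ [_ [_ [_ [h _]]]]]]]; apply h. Qed.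
Lemma lt_add_r x y w : x <' y -> x +' w <' y +' w.
Proof. destruct HO as [_ [_ [_ [_ [_ [_ [_ [h _]]]]]]]]; apply h. Qed.
Lemma dense x y : x <' y -> exists w, x <' w /\ w <' y.
Proof. destruct HO as [_ [_ [_ [_ [_ [_ [_ [_ [h _]]]]]]]]]; apply h. Qed.
Lemma noend x : exists y w, y <' x /\ x <' w.
Proof. destruct HO as [_ [_ [_ [_ [_ [_ [_ [_ [_ h]]]]]]]]]; apply h. Qed.

Lemma add_0r x : x +' z = x.
Proof. rewrite add_comm; apply add_0l. Qed.
Lemma add_oppr x : x +' -' x = z.
Proof. rewrite add_comm; apply add_oppl. Qed.
Lemma lt_add_l x y w : x <' y -> w +' x <' w +' y.
Proof. intro h; rewrite (add_comm w x), (add_comm w y); now apply lt_add_r. Qed.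
Lemma add_K x w : x +' w +' -' w = x.
Proof. now rewrite <- add_assoc, add_oppr, add_0r. Qed.
Lemma add_Kr x w : x +' -' w +' w = x.
Proof. now rewrite <- add_assoc, add_oppl, add_0r. Qed.
Lemma lt_add_r_iff x y w : x +' w <' y +' w <-> x <' y.
Proof. split; [intro h | apply lt_add_r]. apply (lt_add_r _ _ (-' w)) in h. now rewrite !add_K in h. Qed.
Lemma lt_asym x y : x <' y -> ~ y <' x.
Proof. intros h1 h2; apply (lt_irr x); eapply lt_trans; eauto. Qed.

Lemma le_refl x : x <=' x. Proof. now right. Qed.
Lemma lt_le x y : x <' y -> x <=' y. Proof. now left. Qed.
Lemma le_lt_trans x y w : x <=' y -> y <' w -> x <' w.
Proof. intros [h|h] h2; [eapply lt_trans; eauto | now subst]. Qed.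
Lemma lt_le_trans x y w : x <' y -> y <=' w -> x <' w.
Proof. intros h [h2|h2]; [eapply lt_trans; eauto | now subst]. Qed.
Lemma le_trans x y w : x <=' y -> y <=' w -> x <=' w.
Proof. intros [h|h] h2; [left; eapply lt_le_trans; eauto | now subst]. Qed.
Lemma le_not_lt x y : x <=' y <-> ~ y <' x.
Proof.
  split. intros [h|h] h2; [eapply lt_asym; eauto | subst; eapply lt_irr; eauto].
  intro h. destruct (lt_tri x y) as [a|[a|a]]; [now left| now right| tauto].
Qed.
Lemma not_le_lt x y : ~ x <=' y -> y <' x.
Proof. intro h. rewrite le_not_lt in h. now apply NNPP. Qed.
Lemma le_antisym x y : x <=' y -> y <=' x -> x = y.
Proof. intros [h|h] h2; auto. apply le_not_lt in h2; tauto. Qed.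
Lemma le_total x y : x <=' y \/ y <=' x.
Proof. destruct (lt_tri x y) as [a|[a|a]]; [left;left|left;right|right;left]; auto. Qed.
Lemma le_add_r x y w : x <=' y -> x +' w <=' y +' w.
Proof. intros [h|h]; [left; now apply lt_add_r| subst; now right]. Qed.
Lemma le_add_l x y w : x <=' y -> w +' x <=' w +' y.
Proof. intro h; rewrite (add_comm w x), (add_comm w y); now apply le_add_r. Qed.
Lemma le_add x y u v : x <=' y -> u <=' v -> x +' u <=' y +' v.
Proof. intros h1 h2. eapply le_trans; [apply le_add_r; eauto | apply le_add_l; eauto]. Qed.
Lemma lt_add x y u v : x <' y -> u <' v -> x +' u <' y +' v.
Proof. intros h1 h2. eapply lt_trans; [apply lt_add_r; eauto | apply lt_add_l; eauto]. Qed.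
Lemma lt_le_add x y u v : x <' y -> u <=' v -> x +' u <' y +' v.
Proof. intros h1 h2. eapply lt_le_trans; [apply lt_add_r; eauto | apply le_add_l; eauto]. Qed.
Lemma le_lt_add x y u v : x <=' y -> u <' v -> x +' u <' y +' v.
Proof. intros h1 h2. eapply le_lt_trans; [apply le_add_r; eauto | apply lt_add_l; eauto]. Qed.
Lemma le_add_pos x a : z <=' a -> x <=' x +' a.
Proof. intro h. apply (le_add_l _ _ x) in h. now rewrite add_0r in h. Qed.
Lemma lt_add_pos x a : z <' a -> x <' x +' a.
Proof. intro h. apply (lt_add_l _ _ x) in h. now rewrite add_0r in h. Qed.
Lemma lt_sub_l a b c : a <' b +' c <-> a +' -' c <' b.
Proof. rewrite <- (lt_add_r_iff (a +' -' c) b c), add_Kr. tauto. Qed.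
Lemma le_sub_l a b c : a <=' b +' c <-> a +' -' c <=' b.
Proof. rewrite !le_not_lt. rewrite <- (lt_add_r_iff b (a +' -' c) c), add_Kr. tauto. Qed.
Lemma lt_sub_r a b c : a +' c <' b <-> a <' b +' -' c.
Proof. rewrite <- (lt_add_r_iff a (b +' -' c) c), add_Kr. tauto. Qed.
Lemma le_sub_r a b c : a +' c <=' b <-> a <=' b +' -' c.
Proof. rewrite !le_not_lt. rewrite <- (lt_add_r_iff (b +' -' c) a c), add_Kr. tauto. Qed.
Lemma sub_pos a b : a <' b <-> z <' b +' -' a.
Proof. rewrite <- lt_sub_r, add_0l. tauto. Qed.

Lemma half eps : z <' eps -> exists b, z <' b /\ b +' b <=' eps.
Proof.
  intro he. destruct (dense _ _ he) as [a [ha1 ha2]].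
  destruct (classic (a +' a <=' eps)) as [h|h]. exists a; auto.
  apply not_le_lt in h. exists (eps +' -' a). split. apply (proj1 (sub_pos _ _)); exact ha2.
  apply lt_le. apply lt_sub_l in h.
  apply (lt_add_l _ _ (eps +' -' a)) in h. now rewrite add_Kr in h.
Qed.

Lemma X_len x : X x -> length x = n.
Proof. intro h. eapply D_len; eauto. apply HX. Qed.
Lemma G_len g : G g -> length g = m.
Proof. intro h. eapply D_len; eauto. apply HG. Qed.
Lemma Q_len q : Q q -> length q = k.
Proof. intro h. eapply D_len; eauto. apply HQ. Qed.

Lemma dX_met x y w : X x -> X y -> X w ->
  z <=' dX x y /\ (dX x y = z <-> x = y) /\ dX x y = dX y x /\ dX x w <=' dX x y +' dX y w.
Proof. apply HX. Qed.
Lemma dG_met x y w : G x -> G y -> G w ->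
  z <=' dG x y /\ (dG x y = z <-> x = y) /\ dG x y = dG y x /\ dG x w <=' dG x y +' dG y w.
Proof. apply HG. Qed.
Lemma dX_pos x y : X x -> X y -> z <=' dX x y. Proof. intros; apply (dX_met x y x); auto. Qed.
Lemma dX_0 x : X x -> dX x x = z. Proof. intros; apply (dX_met x x x); auto. Qed.
Lemma dX_eq x y : X x -> X y -> dX x y = z -> x = y. Proof. intros; apply (dX_met x y x); auto. Qed.
Lemma dX_sym x y : X x -> X y -> dX x y = dX y x. Proof. intros; apply (dX_met x y x); auto. Qed.
Lemma dX_tri x y w : X x -> X y -> X w -> dX x w <=' dX x y +' dX y w. Proof. intros; apply (dX_met x y w); auto. Qed.
Lemma dG_0 x : G x -> dG x x = z. Proof. intros; apply (dG_met x x x); auto. Qed.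
Lemma dG_sym x y : G x -> G y -> dG x y = dG y x. Proof. intros; apply (dG_met x y x); auto. Qed.
Lemma dG_tri x y w : G x -> G y -> G w -> dG x w <=' dG x y +' dG y w. Proof. intros; apply (dG_met x y w); auto. Qed.

Lemma G_e : G e. Proof. apply HG. Qed.
Lemma G_mul g h : G g -> G h -> G (mul g h). Proof. apply HG. Qed.
Lemma G_inv g : G g -> G (inv g). Proof. apply HG. Qed.
Lemma mul_inv_l g : G g -> mul (inv g) g = e. Proof. apply HG. Qed.
Lemma mul_inv_r g : G g -> mul g (inv g) = e. Proof. apply HG. Qed.
Lemma mul_e_l g : G g -> mul e g = g. Proof. apply HG. Qed.
Lemma mul_assoc g h w : G g -> G h -> G w -> mul g (mul h w) = mul (mul g h) w. Proof. apply HG. Qed.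
Lemma act_X g x : G g -> X x -> X (act g x). Proof. apply Hact. Qed.
Lemma act_e x : X x -> act e x = x. Proof. apply Hact. Qed.
Lemma act_mul g h x : G g -> G h -> X x -> act (mul g h) x = act g (act h x). Proof. apply Hact. Qed.
Lemma act_cont g x eps : G g -> X x -> z <' eps -> exists del, z <' del /\
     forall g' x', G g' -> X x' -> dG g g' <' del -> dX x x' <' del -> dX (act g x) (act g' x') <' eps.
Proof. apply Hact. Qed.
Lemma act_inv g x : G g -> X x -> act (inv g) (act g x) = x.
Proof. intros. rewrite <- act_mul, mul_inv_l, act_e; auto using G_inv. Qed.
Lemma pi_Q x : X x -> Q (pi x). Proof. apply HQ. Qed.
Lemma pi_surj q : Q q -> exists x, X x /\ pi x = q. Proof. apply HQ. Qed.
Lemma pi_inv g x : G g -> X x -> pi (act g x) = pi x. Proof. apply HQ. Qed.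

Definition Rlt (s : list M) := exists x y, s = [x; y] /\ x <' y.
Definition Req (s : list M) := exists x, s = [x; x].
Lemma Rlt_iff a b : Rlt [a; b] <-> a <' b.
Proof. split. intros [x [y [h1 h2]]]; inversion h1; subst; auto. intro; exists a, b; auto. Qed.
Lemma Req_iff a b : Req [a; b] <-> a = b.
Proof. split. intros [x h1]; inversion h1; subst; auto. intros ->; exists b; auto. Qed.
Lemma RLe_iff a b : Rlt [a; b] \/ Req [a; b] <-> a <=' b.
Proof. rewrite Rlt_iff, Req_iff. unfold leM. tauto. Qed.
Definition FLt (t1 t2 : tm M) := FRel Rlt [t1; t2].
Definition FLe (t1 t2 : tm M) := FOr (FRel Rlt [t1; t2]) (FRel Req [t1; t2]).
Lemma DRlt : Def 2 Rlt. Proof. exact (Def_lt2 M O D HD). Qed.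
Lemma DReq : Def 2 Req. Proof. exact (Def_eq2 M O D HD). Qed.
Lemma DX : Def n X. Proof. apply Def_D, HX. Qed.
Lemma DG : Def m G. Proof. apply Def_D, HG. Qed.
Lemma DQ : Def k Q. Proof. apply Def_D, HQ. Qed.

Definition PdX (env : list (list M)) := match env with [x; y; w] => X x /\ X y /\ w = [dX x y] | _ => False end.
Definition PdG (env : list (list M)) := match env with [x; y; w] => G x /\ G y /\ w = [dG x y] | _ => False end.
Definition Pact (env : list (list M)) := match env with [g; x; w] => G g /\ X x /\ w = act g x | _ => False end.
Definition Ppi (env : list (list M)) := match env with [x; q] => X x /\ q = pi x | _ => False end.

Lemma DdX : Def (sumn [n; n; 1]) (Rb PdX [n; n; 1]).
Proof.
  destruct HX as [_ [h _]]. unfold def_fun2 in h. replace (n + n + 1) with (sumn [n; n; 1]) in h by (simpl; lia). apply Rb_of_D with (1 := h).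
  intros env le. destruct env as [|x [|y [|w [|? ?]]]]; simpl in le; try discriminate.
  injection le as lx ly lw. simpl. rewrite app_nil_r.
  rewrite firstn_app_ex, skipn_app_ex, firstn_app_ex by auto.
  rewrite app_assoc, skipn_app_ex by (rewrite length_app; lia). tauto.
Qed.
Lemma DdG : Def (sumn [m; m; 1]) (Rb PdG [m; m; 1]).
Proof.
  destruct HG as [[_ [h _]] _]. unfold def_fun2 in h. replace (m + m + 1) with (sumn [m; m; 1]) in h by (simpl; lia). apply Rb_of_D with (1 := h).
  intros env le. destruct env as [|x [|y [|w [|? ?]]]]; simpl in le; try discriminate.
  injection le as lx ly lw. simpl. rewrite app_nil_r.
  rewrite firstn_app_ex, skipn_app_ex, firstn_app_ex by auto.
  rewrite app_assoc, skipn_app_ex by (rewrite length_app; lia). tauto.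
Qed.
Lemma Dact : Def (sumn [m; n; n]) (Rb Pact [m; n; n]).
Proof.
  destruct Hact as [h _]. unfold def_fun2 in h. replace (m + n + n) with (sumn [m; n; n]) in h by (simpl; lia). apply Rb_of_D with (1 := h).
  intros env le. destruct env as [|x [|y [|w [|? ?]]]]; simpl in le; try discriminate.
  injection le as lx ly lw. simpl. rewrite app_nil_r.
  rewrite firstn_app_ex, skipn_app_ex, firstn_app_ex by auto.
  rewrite app_assoc, skipn_app_ex by (rewrite length_app; lia). tauto.
Qed.
Lemma Dpi : Def (sumn [n; k]) (Rb Ppi [n; k]).
Proof.
  destruct HQ as [_ [h _]]. unfold def_fun in h. replace (n + k) with (sumn [n; k]) in h by (simpl; lia). apply Rb_of_D with (1 := h).
  intros env le. destruct env as [|x [|y [|? ?]]]; simpl in le; try discriminate.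
  injection le as lx ly. simpl. rewrite app_nil_r.
  rewrite firstn_app_ex, skipn_app_ex by auto. tauto.
Qed.

Lemma Rb3 P a b cc (x y w : list M) : length x = a -> length y = b -> length w = cc ->
  (Rb P [a; b; cc] (x ++ y ++ w) <-> P [x; y; w]).
Proof. intros. replace (x ++ y ++ w) with (concat [x; y; w]) by (simpl; now rewrite app_nil_r).
  apply (Rb_concat M). simpl; congruence. Qed.
Lemma Rb2 P a b (x y : list M) : length x = a -> length y = b -> (Rb P [a; b] (x ++ y) <-> P [x; y]).
Proof. intros. replace (x ++ y) with (concat [x; y]) by (simpl; now rewrite app_nil_r).
  apply (Rb_concat M). simpl; congruence. Qed.

Ltac wf_tac := simpl; repeat match goal with |- _ /\ _ => split end;
  try solve [repeat constructor; simpl; lia];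
  try solve [eapply Def_cast'; [eassumption | simpl; lia]];
  try solve [first [apply (Def_cast' _ _ _ DX) | apply (Def_cast' _ _ _ DG) | apply (Def_cast' _ _ _ DQ) | apply (Def_cast' _ _ _ DRlt)
     | apply (Def_cast' _ _ _ DReq) | apply (Def_cast' _ _ _ DdX) | apply (Def_cast' _ _ _ DdG) | apply (Def_cast' _ _ _ Dact)
     | apply (Def_cast' _ _ _ Dpi)]; simpl; lia].


Definition c : M := epsilon (inhabits z) (fun w => z <' w).
Lemma c_pos : z <' c.
Proof. unfold c. apply epsilon_spec. destruct (noend z) as [y [w [_ h]]]; eauto. Qed.

Definition Yp x y v := v <=' c /\ exists g, G g /\ v <=' dX (act g x) (act g y).
Definition PYp (env : list (list M)) := match env with [x; y; w] => X x /\ X y /\ exists v, w = [v] /\ Yp x y v | _ => False end.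
Definition FYp : fm M := FAnd (FRel X [TV 0]) (FAnd (FRel X [TV 1]) (FAnd (FLe (TV 2) (TC [c]))
  (FEx m (FAnd (FRel G [TV 3]) (FEx n (FAnd (FRel (Rb Pact [m; n; n]) [TV 3; TV 0; TV 4])
  (FEx n (FAnd (FRel (Rb Pact [m; n; n]) [TV 3; TV 1; TV 5])
  (FEx 1 (FAnd (FRel (Rb PdX [n; n; 1]) [TV 4; TV 5; TV 6]) (FLe (TV 2) (TV 6)))))))))))).

Lemma DYp : Def (sumn [n; n; 1]) (Rb PYp [n; n; 1]).
Proof.
  apply Def_Rb with (F := FYp). wf_tac.
  intros env le. destruct env as [|x [|y [|w [|? ?]]]]; simpl in le; try discriminate.
  injection le as lx ly lw. destruct (len1 _ w lw) as [v ->]. simpl. rewrite ?app_nil_r.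
  split.
  - intros [hx [hy [hc [g [lg [hg [a [la [ha [b [lb [hb [r [lr [hr hle]]]]]]]]]]]]]]].
    rewrite ?app_nil_r in *. destruct (len1 _ r lr) as [rv ->]. simpl in hle.
    rewrite Rb3 in ha, hb, hr by auto. simpl in ha, hb, hr.
    destruct ha as [_ [_ ->]]. destruct hb as [_ [_ ->]]. destruct hr as [_ [_ hr]]. injection hr as ->.
    rewrite RLe_iff in hc, hle. repeat split; auto. exists v; split; auto. split; auto. exists g; auto.
  - intros [hx [hy [v0 [ev [hc [g [hg hle]]]]]]]. injection ev as <-.
    split; auto. split; auto. split. apply RLe_iff; auto.
    exists g. split. apply G_len; auto. split. rewrite app_nil_r; auto.
    exists (act g x). split. apply X_len, act_X; auto. split. rewrite app_nil_r, Rb3; simpl; auto using G_len, X_len, act_X.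
    exists (act g y). split. apply X_len, act_X; auto. split. rewrite app_nil_r, Rb3; simpl; auto using G_len, X_len, act_X.
    exists [dX (act g x) (act g y)]. split; auto. split. rewrite app_nil_r, Rb3; simpl; auto using G_len, X_len, act_X.
    simpl. apply RLe_iff; auto.
Qed.

Lemma sup_exists (Y : list M -> Prop) : D 1 Y -> (exists v, Y [v]) -> (exists b, forall v, Y [v] -> v <=' b) ->
  exists u, is_sup O Y (EFin u).
Proof.
  intros hY [v0 h0] [b hb]. destruct (Hdc Y hY) as [[s hs] _]. destruct s as [| u |].
  - destruct hs as [h _]. specialize (h v0 h0). simpl in h. tauto.
  - eauto.
  - destruct hs as [_ h]. specialize (h (EFin b) hb). simpl in h. tauto.
Qed.
Lemma inf_exists (Y : list M -> Prop) : D 1 Y -> (exists v, Y [v]) -> (exists b, forall v, Y [v] -> b <=' v) ->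
  exists u, is_inf O Y (EFin u).
Proof.
  intros hY [v0 h0] [b hb]. destruct (Hdc Y hY) as [_ [s hs]]. destruct s as [| u |].
  - destruct hs as [_ h]. specialize (h (EFin b) hb). simpl in h. tauto.
  - eauto.
  - destruct hs as [h _]. specialize (h v0 h0). simpl in h. tauto.
Qed.
Definition sup_of (Y : list M -> Prop) := epsilon (inhabits z) (fun u => is_sup O Y (EFin u)).
Definition inf_of (Y : list M -> Prop) := epsilon (inhabits z) (fun u => is_inf O Y (EFin u)).
Lemma sup_ub Y u v : is_sup O Y (EFin u) -> Y [v] -> v <=' u.
Proof. intros [h _] hv. exact (h v hv). Qed.
Lemma sup_least Y u b : is_sup O Y (EFin u) -> (forall v, Y [v] -> v <=' b) -> u <=' b.
Proof. intros [_ h] hb. exact (h (EFin b) hb). Qed.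
Lemma sup_apx Y u w : is_sup O Y (EFin u) -> w <' u -> exists v, Y [v] /\ w <' v.
Proof. intros hs hw. apply NNPP; intro hn. assert (u <=' w).
  { apply (sup_least Y); auto. intros v hv. apply le_not_lt. intro; apply hn; eauto. }
  apply le_not_lt in H; tauto. Qed.
Lemma inf_lb Y u v : is_inf O Y (EFin u) -> Y [v] -> u <=' v.
Proof. intros [h _] hv. exact (h v hv). Qed.
Lemma inf_greatest Y u b : is_inf O Y (EFin u) -> (forall v, Y [v] -> b <=' v) -> b <=' u.
Proof. intros [_ h] hb. exact (h (EFin b) hb). Qed.
Lemma inf_apx Y u w : is_inf O Y (EFin u) -> u <' w -> exists v, Y [v] /\ v <' w.
Proof. intros hs hw. apply NNPP; intro hn. assert (w <=' u).
  { apply (inf_greatest Y); auto. intros v hv. apply le_not_lt. intro; apply hn; eauto. }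
  apply le_not_lt in H; tauto. Qed.
Lemma sup_char Y u w : is_sup O Y (EFin u) ->
  (w = u <-> (forall v, Y [v] -> v <=' w) /\ (forall w', w' <' w -> exists v, Y [v] /\ w' <' v)).
Proof.
  intro hs. split. intros ->. split. intros; eapply sup_ub; eauto. intros; eapply sup_apx; eauto.
  intros [h1 h2]. apply le_antisym. apply le_not_lt. intro hl. destruct (h2 _ hl) as [v [hv hv']].
  apply le_not_lt in hv'; auto. eapply sup_ub; eauto. eapply sup_least; eauto.
Qed.
Lemma inf_char Y u w : is_inf O Y (EFin u) ->
  (w = u <-> (forall v, Y [v] -> w <=' v) /\ (forall w', w <' w' -> exists v, Y [v] /\ v <' w')).
Proof.
  intro hs. split. intros ->. split. intros; eapply inf_lb; eauto. intros; eapply inf_apx; eauto.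
  intros [h1 h2]. apply le_antisym. eapply inf_greatest; eauto. apply le_not_lt. intro hl. destruct (h2 _ hl) as [v [hv hv']].
  apply le_not_lt in hv'; auto. eapply inf_lb; eauto.
Qed.

Lemma D1_of (F : fm M) (P : M -> Prop) : wf [1] F -> (forall v, sem [[v]] F <-> P v) ->
  D 1 (fun s => exists v, s = [v] /\ P v).
Proof.
  intros w h. apply (D_of_Rb [1] _ (fun env => match env with [w] => exists v, w = [v] /\ P v | _ => False end)).
  - apply Def_Rb with (F := F); auto. intros env le. destruct env as [|w0 [|? ?]]; simpl in le; try discriminate.
    injection le as lw. destruct (len1 _ w0 lw) as [v ->]. rewrite h. split; eauto. intros [v' [ev hv]]. injection ev as ->; auto.
  - intros env le. destruct env as [|w0 [|? ?]]; simpl in le; try discriminate. simpl. rewrite app_nil_r; tauto.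
  - intros s [v [-> _]]; reflexivity.
Qed.

Definition Yset x y := fun s => exists v, s = [v] /\ Yp x y v.
Definition dp x y := sup_of (Yset x y).
Lemma Yp_z x y : X x -> X y -> Yp x y z.
Proof. intros hx hy. split. apply lt_le, c_pos. exists e. split. apply G_e. rewrite !act_e; auto. apply dX_pos; auto. Qed.
Lemma dp_sup x y : X x -> X y -> is_sup O (Yset x y) (EFin (dp x y)).
Proof.
  intros hx hy. unfold dp, sup_of. apply epsilon_spec. apply sup_exists. pose proof DYp as h1.
  - apply (D1_of (FRel (Rb PYp [n; n; 1]) [TC x; TC y; TV 0])).
    pose proof (X_len _ hx); pose proof (X_len _ hy). wf_tac.
    intro v. simpl. rewrite Rb3 by (auto using X_len). simpl. split. intros [_ [_ [v' [ev h]]]]. injection ev as ->; auto.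
    intro h; repeat split; eauto.
  - exists z. exists z; split; auto. apply Yp_z; auto.
  - exists c. intros v [v' [ev [h _]]]. injection ev as ->; auto.
Qed.
Lemma dp_ub x y v : X x -> X y -> Yp x y v -> v <=' dp x y.
Proof. intros hx hy h. eapply sup_ub. apply dp_sup; auto. exists v; auto. Qed.
Lemma dp_least x y b : X x -> X y -> (forall v, Yp x y v -> v <=' b) -> dp x y <=' b.
Proof. intros hx hy h. eapply sup_least. apply dp_sup; auto. intros v [v' [ev hv]]. injection ev as ->; auto. Qed.
Lemma dp_char x y u : X x -> X y -> (u = dp x y <-> (forall v, Yp x y v -> v <=' u) /\ (forall w, w <' u -> exists v, Yp x y v /\ w <' v)).
Proof.
  intros hx hy. rewrite (sup_char _ _ u (dp_sup x y hx hy)). split.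
  - intros [h1 h2]. split. intros v hv; apply h1; exists v; auto. intros w hw. destruct (h2 w hw) as [v [[v' [ev hv]] hw']]. injection ev as ->; eauto.
  - intros [h1 h2]. split. intros v [v' [ev hv]]. injection ev as ->; auto. intros w hw. destruct (h2 w hw) as [v [hv hw']]. exists v; split; auto. exists v; auto.
Qed.

Definition Pdp (env : list (list M)) := match env with [x; y; w] => X x /\ X y /\ w = [dp x y] | _ => False end.
Definition Fdp : fm M := FAnd (FRel X [TV 0]) (FAnd (FRel X [TV 1]) (FAnd
  (FAll 1 (FImp (FRel (Rb PYp [n; n; 1]) [TV 0; TV 1; TV 3]) (FLe (TV 3) (TV 2))))
  (FAll 1 (FImp (FLt (TV 3) (TV 2)) (FEx 1 (FAnd (FRel (Rb PYp [n; n; 1]) [TV 0; TV 1; TV 4]) (FLt (TV 3) (TV 4)))))))).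
Lemma Ddp : Def (sumn [n; n; 1]) (Rb Pdp [n; n; 1]).
Proof.
  pose proof DX. pose proof DRlt. pose proof DReq. pose proof DYp.
  apply Def_Rb with (F := Fdp). wf_tac.
  intros env le. destruct env as [|x [|y [|w [|? ?]]]]; simpl in le; try discriminate.
  injection le as lx ly lw. destruct (len1 _ w lw) as [u ->]. simpl. rewrite ?app_nil_r.
  split.
  - intros [hx [hy [h1 h2]]]. split; auto. split; auto. f_equal. apply dp_char; auto. split.
    + intros v hv. apply NNPP; intro hn. apply h1. exists [v]. split; [reflexivity|]. simpl. intros [a|b].
      apply a. rewrite Rb3 by auto; simpl; repeat split; eauto. apply hn. apply RLe_iff. exact b.
    + intros w hw. apply NNPP; intro hn. apply h2. exists [w]. split; [reflexivity|]. simpl. intros [a|b].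
      apply a, Rlt_iff, hw. destruct b as [y1 [ly1 [h3 h4]]]. destruct (len1 _ y1 ly1) as [v ->]. simpl in h3, h4.
      rewrite Rb3 in h3 by auto. simpl in h3. destruct h3 as [_ [_ [v' [ev hv]]]]. injection ev as <-.
      apply hn. exists v; split; auto. apply Rlt_iff; auto.
  - intros [hx [hy ev]]. injection ev as ->. split; auto. split; auto. split.
    + intros [y0 [ly0 h]]. destruct (len1 _ y0 ly0) as [v ->]. simpl in h. apply h.
      destruct (classic (Yp x y v)) as [hv|hv]. right. apply RLe_iff, dp_ub; auto.
      left. rewrite Rb3 by auto. simpl. intros [_ [_ [v' [ev hv']]]]. injection ev as <-. auto.
    + intros [y0 [ly0 h]]. destruct (len1 _ y0 ly0) as [w ->]. simpl in h. apply h.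
      destruct (classic (w <' dp x y)) as [hw|hw]; [right|left; rewrite Rlt_iff; auto].
      destruct (proj1 (dp_char x y _ hx hy) eq_refl) as [_ h2]. destruct (h2 w hw) as [v [hv hwv]].
      exists [v]. split; auto. simpl. rewrite Rb3 by auto. simpl. split. repeat split; eauto. apply Rlt_iff; auto.
Qed.


Lemma dp_ge_g x y g t : X x -> X y -> G g -> t <=' c -> t <=' dX (act g x) (act g y) -> t <=' dp x y.
Proof. intros. apply dp_ub; auto. split; eauto. Qed.
Lemma dp_ge x y t : X x -> X y -> t <=' c -> t <=' dX x y -> t <=' dp x y.
Proof. intros. apply (dp_ge_g x y e); auto using G_e. rewrite !act_e; auto. Qed.
Lemma dp_nonneg x y : X x -> X y -> z <=' dp x y.
Proof. intros. apply dp_ub; auto. apply Yp_z; auto. Qed.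
Lemma dp_le_c x y : X x -> X y -> dp x y <=' c.
Proof. intros. apply dp_least; auto. intros v [h _]; auto. Qed.
Lemma dp_self x : X x -> dp x x = z.
Proof. intros hx. apply le_antisym; [|apply dp_nonneg; auto]. apply dp_least; auto.
  intros v [_ [g [hg h]]]. rewrite dX_0 in h; auto using act_X. Qed.
Lemma pos_min a b : z <' a -> z <' b -> exists t, z <' t /\ t <=' a /\ t <=' b.
Proof. intros ha hb. destruct (le_total a b) as [h|h]; [exists a | exists b]; repeat split; auto using le_refl. Qed.
Lemma dX_neq_pos x y : X x -> X y -> x <> y -> z <' dX x y.
Proof. intros hx hy hne. destruct (dX_pos x y hx hy) as [h|h]; auto. exfalso; apply hne, dX_eq; auto. Qed.
Lemma dp_eq x y : X x -> X y -> dp x y = z -> x = y.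
Proof.
  intros hx hy h. apply NNPP; intro hne. pose proof (dX_neq_pos x y hx hy hne) as hp.
  destruct (pos_min _ _ hp c_pos) as [t [ht1 [ht2 ht3]]].
  assert (t <=' dp x y) by (apply dp_ge; auto). rewrite h in H. apply le_not_lt in H; auto.
Qed.
Lemma Yp_sym x y v : X x -> X y -> Yp x y v -> Yp y x v.
Proof. intros hx hy [h1 [g [hg h2]]]. split; auto. exists g; split; auto. rewrite dX_sym; auto using act_X. Qed.
Lemma dp_sym x y : X x -> X y -> dp x y = dp y x.
Proof. intros hx hy. apply le_antisym; apply dp_least; auto; intros v hv; apply dp_ub; auto; apply Yp_sym; auto. Qed.
Lemma dp_tri x y w : X x -> X y -> X w -> dp x w <=' dp x y +' dp y w.
Proof.
  intros hx hy hw. apply dp_least; auto. intros v [hv [g [hg h]]].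
  pose proof (dX_tri (act g x) (act g y) (act g w)) as ht.
  destruct (le_total c (dX (act g x) (act g y))) as [h1|h1].
  { eapply le_trans; [exact hv|]. eapply le_trans; [apply (dp_ge_g x y g c); auto using le_refl|].
    apply le_add_pos, dp_nonneg; auto. }
  destruct (le_total c (dX (act g y) (act g w))) as [h2|h2].
  { eapply le_trans; [exact hv|]. eapply le_trans; [apply (dp_ge_g y w g c); auto using le_refl|].
    rewrite add_comm. apply le_add_pos, dp_nonneg; auto. }
  eapply le_trans; [exact h|]. eapply le_trans; [apply ht; auto using act_X|].
  apply le_add; apply dp_ge_g with g; auto using le_refl.
Qed.
Lemma dp_inv h x y : G h -> X x -> X y -> dp (act h x) (act h y) = dp x y.
Proof.
  intros hh hx hy. apply le_antisym; apply dp_least; auto using act_X; intros v [hv [g [hg h1]]]; apply dp_ub; auto using act_X.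
  - split; auto. exists (mul g h). split. apply G_mul; auto. rewrite !act_mul; auto.
  - split; auto. exists (mul g (inv h)). split. apply G_mul; auto using G_inv. rewrite !act_mul, !act_inv; auto using G_inv, act_X.
Qed.

Definition Zp x y r := exists g, G g /\ r = dp x (act g y).
Definition PZp (env : list (list M)) := match env with [x; y; w] => X x /\ X y /\ exists r, w = [r] /\ Zp x y r | _ => False end.
Definition FZp : fm M := FAnd (FRel X [TV 0]) (FAnd (FRel X [TV 1]) (FEx m (FAnd (FRel G [TV 3])
  (FEx n (FAnd (FRel (Rb Pact [m; n; n]) [TV 3; TV 1; TV 4]) (FRel (Rb Pdp [n; n; 1]) [TV 0; TV 4; TV 2])))))).
Lemma DZp : Def (sumn [n; n; 1]) (Rb PZp [n; n; 1]).
Proof.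
  pose proof DX. pose proof DG. pose proof Dact. pose proof Ddp.
  apply Def_Rb with (F := FZp). wf_tac.
  intros env le. destruct env as [|x [|y [|w [|? ?]]]]; simpl in le; try discriminate.
  injection le as lx ly lw. destruct (len1 _ w lw) as [r ->]. simpl. rewrite ?app_nil_r.
  split.
  - intros [hx [hy [g [lg [hg [b [lb [h1 h2]]]]]]]]. rewrite app_nil_r in hg, h1.
    rewrite Rb3 in h1, h2 by auto. simpl in h1, h2. destruct h1 as [_ [_ ->]]. destruct h2 as [_ [_ ev]]. injection ev as ->.
    repeat split; auto. exists (dp x (act g y)); split; auto. exists g; auto.
  - intros [hx [hy [r' [ev [g [hg ->]]]]]]. injection ev as ->. split; auto. split; auto.
    exists g. split. apply G_len; auto. split. rewrite app_nil_r; auto.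
    exists (act g y). split. apply X_len, act_X; auto. rewrite app_nil_r. rewrite !Rb3 by (auto using G_len, X_len, act_X).
    simpl. repeat split; auto using act_X.
Qed.

Definition Zset x y := fun s => exists r, s = [r] /\ Zp x y r.
Definition phi x y := inf_of (Zset x y).
Lemma phi_inf x y : X x -> X y -> is_inf O (Zset x y) (EFin (phi x y)).
Proof.
  intros hx hy. unfold phi, inf_of. apply epsilon_spec. apply inf_exists. pose proof DZp as h1.
  - apply (D1_of (FRel (Rb PZp [n; n; 1]) [TC x; TC y; TV 0])).
    pose proof (X_len _ hx); pose proof (X_len _ hy). wf_tac.
    intro v. simpl. rewrite Rb3 by (auto using X_len). simpl. split. intros [_ [_ [v' [ev h]]]]. injection ev as ->; auto.
    intro h; repeat split; eauto.
  - exists (dp x (act e y)). exists (dp x (act e y)); split; auto. exists e; split; auto using G_e.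
  - exists z. intros v [v' [ev [g [hg ->]]]]. injection ev as ->. apply dp_nonneg; auto using act_X.
Qed.
Lemma phi_lb x y g : X x -> X y -> G g -> phi x y <=' dp x (act g y).
Proof. intros. eapply inf_lb. apply phi_inf; auto. exists (dp x (act g y)); split; auto. exists g; auto. Qed.
Lemma phi_greatest x y b : X x -> X y -> (forall g, G g -> b <=' dp x (act g y)) -> b <=' phi x y.
Proof. intros hx hy h. eapply inf_greatest. apply phi_inf; auto. intros v [v' [ev [g [hg ->]]]]. injection ev as ->; auto. Qed.
Lemma phi_apx x y w : X x -> X y -> phi x y <' w -> exists g, G g /\ dp x (act g y) <' w.
Proof. intros hx hy h. destruct (inf_apx _ _ _ (phi_inf x y hx hy) h) as [v [[v' [ev [g [hg ->]]]] hv]].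
  injection ev as ->. eauto. Qed.
Lemma phi_char x y u : X x -> X y -> (u = phi x y <-> (forall v, Zp x y v -> u <=' v) /\ (forall w, u <' w -> exists v, Zp x y v /\ v <' w)).
Proof.
  intros hx hy. rewrite (inf_char _ _ u (phi_inf x y hx hy)). split.
  - intros [h1 h2]. split. intros v hv; apply h1; exists v; auto. intros w hw. destruct (h2 w hw) as [v [[v' [ev hv]] hw']]. injection ev as ->; eauto.
  - intros [h1 h2]. split. intros v [v' [ev hv]]. injection ev as ->; auto. intros w hw. destruct (h2 w hw) as [v [hv hw']]. exists v; split; auto. exists v; auto.
Qed.

Definition Pphi (env : list (list M)) := match env with [x; y; w] => X x /\ X y /\ w = [phi x y] | _ => False end.
Definition Fphi : fm M := FAnd (FRel X [TV 0]) (FAnd (FRel X [TV 1]) (FAnd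
  (FAll 1 (FImp (FRel (Rb PZp [n; n; 1]) [TV 0; TV 1; TV 3]) (FLe (TV 2) (TV 3))))
  (FAll 1 (FImp (FLt (TV 2) (TV 3)) (FEx 1 (FAnd (FRel (Rb PZp [n; n; 1]) [TV 0; TV 1; TV 4]) (FLt (TV 4) (TV 3)))))))).
Lemma Dphi : Def (sumn [n; n; 1]) (Rb Pphi [n; n; 1]).
Proof.
  pose proof DX. pose proof DRlt. pose proof DReq. pose proof DZp.
  apply Def_Rb with (F := Fphi). wf_tac.
  intros env le. destruct env as [|x [|y [|w [|? ?]]]]; simpl in le; try discriminate.
  injection le as lx ly lw. destruct (len1 _ w lw) as [u ->]. simpl. rewrite ?app_nil_r.
  split.
  - intros [hx [hy [h1 h2]]]. split; auto. split; auto. f_equal. apply phi_char; auto. split.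
    + intros v hv. apply NNPP; intro hn. apply h1. exists [v]. split; [reflexivity|]. simpl. intros [a|b].
      apply a. rewrite Rb3 by auto; simpl; repeat split; eauto. apply hn. apply RLe_iff. exact b.
    + intros w hw. apply NNPP; intro hn. apply h2. exists [w]. split; [reflexivity|]. simpl. intros [a|b].
      apply a, Rlt_iff, hw. destruct b as [y1 [ly1 [h3 h4]]]. destruct (len1 _ y1 ly1) as [v ->]. simpl in h3, h4.
      rewrite Rb3 in h3 by auto. simpl in h3. destruct h3 as [_ [_ [v' [ev hv]]]]. injection ev as <-.
      apply hn. exists v; split; auto. apply Rlt_iff; auto.
  - intros [hx [hy ev]]. injection ev as ->. split; auto. split; auto. split.
    + intros [y0 [ly0 h]]. destruct (len1 _ y0 ly0) as [v ->]. simpl in h. apply h.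
      destruct (classic (Zp x y v)) as [hv|hv]. right. apply RLe_iff. destruct hv as [g [hg ->]]. apply phi_lb; auto.
      left. rewrite Rb3 by auto. simpl. intros [_ [_ [v' [ev hv']]]]. injection ev as <-. auto.
    + intros [y0 [ly0 h]]. destruct (len1 _ y0 ly0) as [w ->]. simpl in h. apply h.
      destruct (classic (phi x y <' w)) as [hw|hw]; [right|left; rewrite Rlt_iff; auto].
      destruct (proj1 (phi_char x y _ hx hy) eq_refl) as [_ h2]. destruct (h2 w hw) as [v [hv hwv]].
      exists [v]. split; auto. simpl. rewrite Rb3 by auto. simpl. split. repeat split; eauto. apply Rlt_iff; auto.
Qed.

Lemma phi_nonneg x y : X x -> X y -> z <=' phi x y.
Proof. intros. apply phi_greatest; auto. intros. apply dp_nonneg; auto using act_X. Qed.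
Lemma phi_le_dp x y : X x -> X y -> phi x y <=' dp x y.
Proof. intros. rewrite <- (act_e y) at 2; auto. apply phi_lb; auto using G_e. Qed.
Lemma phi_self x : X x -> phi x x = z.
Proof. intros. apply le_antisym; [|apply phi_nonneg; auto]. rewrite <- (dp_self x); auto. apply phi_le_dp; auto. Qed.
Lemma phi_inv_r h x y : G h -> X x -> X y -> phi x (act h y) = phi x y.
Proof.
  intros hh hx hy. apply le_antisym.
  - apply phi_greatest; auto. intros g hg. rewrite <- (act_inv h y) at 2 by auto. rewrite <- act_mul; auto using G_inv, act_X.
    apply phi_lb; auto using act_X, G_mul, G_inv.
  - apply phi_greatest; auto using act_X. intros g hg. rewrite <- act_mul; auto. apply phi_lb; auto using G_mul.
Qed.
Lemma phi_inv_l h x y : G h -> X x -> X y -> phi (act h x) y = phi x y.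
Proof.
  intros hh hx hy. apply le_antisym.
  - apply phi_greatest; auto. intros g hg. rewrite <- (dp_inv h) by auto using act_X. rewrite <- act_mul by auto.
    apply phi_lb; auto using act_X, G_mul.
  - apply phi_greatest; auto using act_X. intros g hg. rewrite <- (dp_inv (inv h)) by auto using act_X, G_inv.
    rewrite act_inv by auto. rewrite <- act_mul by auto using G_inv. apply phi_lb; auto using G_mul, G_inv.
Qed.
Lemma phi_sym x y : X x -> X y -> phi x y = phi y x.
Proof.
  assert (H : forall x y, X x -> X y -> phi x y <=' phi y x).
  { clear x y. intros x y hx hy. apply phi_greatest; auto. intros g hg.
    rewrite <- (dp_inv (inv g)) by auto using act_X, G_inv. rewrite act_inv by auto. rewrite dp_sym by auto using act_X, G_inv.
    apply phi_lb; auto using G_inv. }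
  intros; apply le_antisym; auto.
Qed.
Lemma phi_lip x y w : X x -> X y -> X w -> phi y w <=' phi x w +' dp x y.
Proof.
  intros hx hy hw. apply le_sub_l. apply phi_greatest; auto. intros g hg. apply le_sub_l.
  eapply le_trans. apply (phi_lb y w g); auto. eapply le_trans. apply (dp_tri y x); auto using act_X.
  rewrite (add_comm (dp y x)), (dp_sym y x) by auto. apply le_refl.
Qed.
Lemma phi_tri x y w : X x -> X y -> X w -> phi x w <=' phi x y +' phi y w.
Proof.
  intros hx hy hw.
  assert (S1 : forall h, G h -> phi x w <=' phi x y +' dp y (act h w)).
  { intros h hh. apply le_sub_l. apply phi_greatest; auto. intros g hg. apply le_sub_l.
    rewrite <- (dp_inv g y) by auto using act_X. rewrite <- act_mul by auto.
    eapply le_trans. apply (phi_lb x w (mul g h)); auto using G_mul. rewrite act_mul by auto.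
    apply dp_tri; auto using act_X. }
  rewrite add_comm. apply le_sub_l. apply phi_greatest; auto. intros h hh. apply le_sub_l. rewrite add_comm. auto.
Qed.

Lemma compact1 (P1 : M -> Prop) (P2 : M -> list M -> Prop) (F1 F2 : fm M) :
  wf [1] F1 -> (forall t, sem [[t]] F1 <-> P1 t) ->
  wf [1; m] F2 -> (forall t g, length g = m -> (sem [[t]; g] F2 <-> P1 t /\ P2 t g)) ->
  (forall t g, P2 t g -> G g) ->
  (forall t, P1 t -> exists g, P2 t g) ->
  (forall t, P1 t -> forall g, G g -> ~ P2 t g -> exists eps, z <' eps /\ forall g', G g' -> dG g g' <' eps -> ~ P2 t g') ->
  (forall t1 t2, P1 t1 -> P1 t2 -> exists t3, P1 t3 /\ forall g, P2 t3 g -> P2 t1 g /\ P2 t2 g) ->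
  exists g, G g /\ forall t, P1 t -> P2 t g.
Proof.
  intros w1 s1 w2 s2 hG hne hcl hfi.
  destruct (HGc 1 (fun s => exists t, s = [t] /\ P1 t) (fun s g => exists t, s = [t] /\ P2 t g)) as [g0 [hg0 h0]].
  - apply (D1_of F1); auto.
  - assert (E : sumn [1; m] = 1 + m) by (simpl; lia). rewrite <- E.
    apply (D_of_Rb [1; m] _ (fun env => match env with [w; g] => exists t, w = [t] /\ P1 t /\ P2 t g | _ => False end)).
    + apply Def_Rb with (F := F2); auto. intros env le. destruct env as [|w [|g [|? ?]]]; simpl in le; try discriminate.
      injection le as lw lg. destruct (len1 _ w lw) as [t ->]. rewrite s2 by auto. split. intros; eauto.
      intros [t' [ev h]]. injection ev as ->. auto.
    + intros env le. destruct env as [|w [|g [|? ?]]]; simpl in le; try discriminate.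
      injection le as lw lg. destruct (len1 _ w lw) as [t ->]. simpl. rewrite app_nil_r. split.
      intros [t' [ev [h1 h2]]]. injection ev as ->. split; eauto.
      intros [[t1 [ev1 h1]] [t2 [ev2 h2]]]. injection ev1 as ->. injection ev2 as ->. eauto.
    + intros s [[t1 [ev1 h1]] [t2 [ev2 h2]]]. rewrite E.
      assert (HL : length s = length (firstn 1 s) + length (skipn 1 s)) by (rewrite <- length_app, firstn_skipn; auto).
      rewrite HL, ev1, (G_len _ (hG _ _ h2)). reflexivity.
  - intros t g [t' [-> h1]] [t'' [ev h2]]. eauto.
  - intros t [t' [-> h1]]. destruct (hne t' h1) as [g hg]. eauto.
  - intros t [t' [-> h1]] g hg hn. destruct (hcl t' h1 g hg) as [eps [he h]].
    intro h2; apply hn; eauto. exists eps; split; auto. intros g' hg' hd [t'' [ev h3]]. injection ev as ->. eapply h; eauto.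
  - intros t1 t2 [a [-> ha]] [b [-> hb]]. destruct (hfi a b ha hb) as [t3 [h3 h4]]. exists [t3]. split; eauto.
    intros g [t' [ev h5]]. injection ev as ->. destruct (h4 g h5). split; eauto.
  - exists g0. split; auto. intros t ht. destruct (h0 [t]) as [t' [ev h]]; eauto. injection ev as ->; auto.
Qed.

Lemma phi_zero x y : X x -> X y -> phi x y = z -> exists g, G g /\ x = act g y.
Proof.
  intros hx hy hz.
  pose proof DX as H1. pose proof DG as H2. pose proof Dact as H3. pose proof DdX as H4. pose proof DRlt as H5. pose proof DReq as H6.
  pose proof (X_len _ hx) as lx. pose proof (X_len _ hy) as ly.
  destruct (compact1 (fun t => z <' t /\ t <=' c) (fun t g => G g /\ dX x (act g y) <=' t)
    (FAnd (FLt (TC [z]) (TV 0)) (FLe (TV 0) (TC [c])))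
    (FAnd (FLt (TC [z]) (TV 0)) (FAnd (FLe (TV 0) (TC [c])) (FAnd (FRel G [TV 1]) (FEx n (FAnd
      (FRel (Rb Pact [m; n; n]) [TV 1; TC y; TV 2]) (FEx 1 (FAnd (FRel (Rb PdX [n; n; 1]) [TC x; TV 2; TV 3]) (FLe (TV 3) (TV 0)))))))))) as [g0 [hg0 h0]].
  - wf_tac.
  - intro t. simpl. rewrite Rlt_iff, RLe_iff. tauto.
  - wf_tac.
  - intros t g lg. simpl. rewrite Rlt_iff, RLe_iff, app_nil_r. split.
    + intros [h1 [h2 [hg [b [lb [h3 [r [lr [h4 h5]]]]]]]]]. destruct (len1 _ r lr) as [rv ->].
      rewrite app_nil_r in h3. rewrite Rb3 in h3, h4 by auto. simpl in h3, h4, h5. rewrite RLe_iff in h5.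
      destruct h3 as [_ [_ ->]]. destruct h4 as [_ [_ ev]]. injection ev as ->. auto.
    + intros [[h1 h2] [hg h3]]. repeat split; auto. exists (act g y). split. apply X_len, act_X; auto.
      rewrite app_nil_r, Rb3 by (auto using G_len, X_len, act_X). split. simpl; auto.
      exists [dX x (act g y)]. split; auto. rewrite Rb3 by (auto using X_len, act_X). simpl. split.
      repeat split; auto using act_X. apply RLe_iff; auto.
  - intros t g [hg _]; auto.
  - intros t [ht1 ht2]. rewrite <- hz in ht1. destruct (phi_apx x y t hx hy ht1) as [g [hg hd]]. exists g. split; auto.
    apply le_not_lt. intro hlt. assert (t <=' dp x (act g y)) by (apply dp_ge; auto using act_X; apply lt_le; auto).
    apply le_not_lt in H; auto.
  - intros t [ht1 ht2] g hg hn. assert (hlt : t <' dX x (act g y)) by (apply not_le_lt; tauto).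
    apply sub_pos in hlt. destruct (act_cont g y _ hg hy hlt) as [del [hdel h]]. exists del. split; auto.
    intros g' hg' hd [_ hle]. specialize (h g' y hg' hy hd). rewrite dX_0 in h by auto. specialize (h hdel).
    assert (dX x (act g y) <' dX x (act g y)).
    { eapply le_lt_trans. apply (dX_tri x (act g' y) (act g y)); auto using act_X.
      rewrite (dX_sym (act g' y)) by auto using act_X. eapply lt_le_trans. apply le_lt_add; eauto.
      rewrite add_comm, add_Kr. apply le_refl. }
    apply lt_irr in H; auto.
  - intros t1 t2 h1 h2. destruct (le_total t1 t2) as [h|h]; [exists t1 | exists t2]; split; auto;
      intros g [hg h3]; repeat split; eauto using le_trans, le_refl.
  - exists g0. split; auto. apply NNPP; intro hne.
    assert (hp : z <' dX x (act g0 y)) by (apply dX_neq_pos; auto using act_X).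
    destruct (pos_min _ _ hp c_pos) as [t [ht1 [ht2 ht3]]]. destruct (dense _ _ ht1) as [t' [h1 h2]].
    destruct (h0 t') as [_ h3]. split; auto. apply lt_le, (lt_le_trans _ _ _ h2 ht3).
    apply le_not_lt in h3. apply h3. eapply lt_le_trans; eauto.
Qed.

Definition P2c x a2 d g := G g /\ forall eta, z <' eta -> exists g', G g' /\ dG g g' <' eta /\
  exists y, X y /\ dX x y <' d /\ a2 <' dX (act g' x) (act g' y).
Definition F2c x a2 : fm M := FAnd (FLt (TC [z]) (TV 0)) (FAnd (FRel G [TV 1]) (FAll 1 (FImp (FLt (TC [z]) (TV 2)) (FEx m (FAnd (FRel G [TV 3]) (FEx 1 (FAnd (FRel (Rb PdG [m; m; 1]) [TV 1; TV 3; TV 4]) (FAnd (FLt (TV 4) (TV 2)) (FEx n (FAnd (FRel X [TV 5]) (FEx 1 (FAnd (FRel (Rb PdX [n; n; 1]) [TC x; TV 5; TV 6]) (FAnd (FLt (TV 6) (TV 0)) (FEx n (FAnd (FRel (Rb Pact [m; n; n]) [TV 3; TC x; TV 7]) (FEx n (FAnd (FRel (Rb Pact [m; n; n]) [TV 3; TV 5; TV 8]) (FEx 1 (FAnd (FRel (Rb PdX [n; n; 1]) [TV 7; TV 8; TV 9]) (FLt (TC [a2]) (TV 9))))))))))))))))))))).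
Lemma sem_F2c x a2 d g : X x -> length g = m -> (sem [[d]; g] (F2c x a2) <-> z <' d /\ P2c x a2 d g).
Proof.
  intros hx lg. pose proof (X_len _ hx) as lx. unfold F2c, P2c. simpl. rewrite ?app_nil_r, Rlt_iff.
  split.
  - intros [hd [hg h]]. split; auto. split; auto. intros eta heta. apply NNPP; intro hn. apply h. exists [eta].
    split; auto. simpl. intros [a|b]. apply a, Rlt_iff, heta.
    destruct b as [g' [lg' [hg' [r [lr [h1 [h2 [y [ly [hy [r2 [lr2 [h3 [h4 [a [la [h5 [b [lb [h6 [r3 [lr3 [h7 h8]]]]]]]]]]]]]]]]]]]]]]].
    destruct (len1 _ r lr) as [rv ->]. destruct (len1 _ r2 lr2) as [r2v ->]. destruct (len1 _ r3 lr3) as [r3v ->].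
    rewrite ?app_nil_r in *. simpl in *. rewrite Rb3 in h1, h3, h5, h6, h7 by auto. simpl in h1, h3, h5, h6, h7.
    rewrite Rlt_iff in h2, h4, h8.
    destruct h1 as [_ [_ ev1]]. injection ev1 as ->. destruct h3 as [_ [_ ev3]]. injection ev3 as ->.
    destruct h5 as [_ [_ ->]]. destruct h6 as [_ [_ ->]]. destruct h7 as [_ [_ ev7]]. injection ev7 as ->.
    apply hn. exists g'. split; auto. split; auto. exists y. auto.
  - intros [hd [hg h]]. split; auto. split; auto. intros [y0 [ly0 hn]]. destruct (len1 _ y0 ly0) as [eta ->].
    simpl in hn. apply hn. destruct (classic (z <' eta)) as [heta|heta]; [right | left; rewrite Rlt_iff; auto].
    destruct (h eta heta) as [g' [hg' [hd' [y [hy [hxy ha]]]]]].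
    exists g'. split; [apply G_len; auto|]. split; [rewrite app_nil_r; auto|].
    exists [dG g g']. split; auto. split. rewrite app_nil_r, Rb3 by (auto using G_len); simpl; auto. split. simpl; apply Rlt_iff; auto.
    exists y. split. apply X_len; auto. split. rewrite app_nil_r; auto.
    exists [dX x y]. split; auto. split. rewrite app_nil_r, Rb3 by (auto using X_len); simpl; auto. split. simpl; apply Rlt_iff; auto.
    exists (act g' x). split. apply X_len, act_X; auto. split. rewrite app_nil_r, Rb3 by (auto using G_len, X_len, act_X); simpl; auto.
    exists (act g' y). split. apply X_len, act_X; auto. split. rewrite app_nil_r, Rb3 by (auto using G_len, X_len, act_X); simpl; auto.
    exists [dX (act g' x) (act g' y)]. split; auto. split. rewrite app_nil_r, Rb3 by (auto using X_len, act_X); simpl; repeat split; auto using act_X.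
    simpl; apply Rlt_iff; auto.
Qed.

Lemma dp_cont x eps : X x -> z <' eps -> exists del, z <' del /\ forall y, X y -> dX x y <' del -> dp x y <' eps.
Proof.
  intros hx he. destruct (dense _ _ he) as [a2 [ha1 ha2]]. destruct (half _ ha1) as [b [hb1 hb2]].
  destruct (classic (exists del, z <' del /\ forall g y, G g -> X y -> dX x y <' del -> dX (act g x) (act g y) <=' a2)) as [[del [hd h]] | hno].
  { exists del; split; auto. intros y hy hxy. eapply le_lt_trans; [|exact ha2]. apply dp_least; auto.
    intros v [_ [g [hg hv]]]. eapply le_trans; eauto. }
  exfalso.
  pose proof DX as H1. pose proof DG as H2. pose proof Dact as H3. pose proof DdX as H4. pose proof DRlt as H5. pose proof DdG as H6.
  pose proof (X_len _ hx) as lx.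
  destruct (compact1 (fun d => z <' d) (P2c x a2) (FLt (TC [z]) (TV 0)) (F2c x a2)) as [g0 [hg0 h0]].
  - wf_tac.
  - intro t. simpl. rewrite Rlt_iff. tauto.
  - unfold F2c. wf_tac.
  - intros t g lg. apply sem_F2c; auto.
  - intros t g [hg _]; auto.
  - intros d hd. apply NNPP; intro H. apply hno. exists d; split; auto. intros g y hg hy hxy. apply le_not_lt. intro hlt.
    apply H. exists g. split; auto. intros eta heta. exists g. split; auto. split. rewrite dG_0; auto. exists y; auto.
  - intros d hd g hg hn.
    assert (hE : exists eta, z <' eta /\ ~ exists g', G g' /\ dG g g' <' eta /\ exists y, X y /\ dX x y <' d /\ a2 <' dX (act g' x) (act g' y)).
    { apply NNPP; intro H. apply hn. split; auto. intros eta heta. apply NNPP; intro H'. apply H. eauto. }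
    destruct hE as [eta [heta hne]]. destruct (half _ heta) as [b' [hb'1 hb'2]]. exists b'. split; auto.
    intros g'' hg'' hd'' [_ h2]. destruct (h2 b' hb'1) as [g' [hg' [hd' rest]]]. apply hne. exists g'. split; auto. split; auto.
    eapply le_lt_trans. apply (dG_tri g g'' g'); auto. eapply lt_le_trans; [apply lt_add; eauto|]. auto.
  - intros t1 t2 h1 h2. destruct (le_total t1 t2) as [h|h]; [exists t1 | exists t2]; split; auto;
      intros g [hg h3]; split; split; auto; intros eta heta; destruct (h3 eta heta) as [g' [hg' [hd' [y [hy [hxy ha]]]]]];
      exists g'; repeat split; auto; exists y; repeat split; auto; eapply lt_le_trans; eauto using le_refl.
  - destruct (act_cont g0 x b hg0 hx hb1) as [del [hdel hc]]. destruct (h0 del hdel) as [_ h].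
    destruct (h del hdel) as [g' [hg' [hd' [y [hy [hxy ha]]]]]].
    assert (h1 : dX (act g0 x) (act g' x) <' b) by (apply hc; auto; rewrite dX_0; auto).
    assert (h2 : dX (act g0 x) (act g' y) <' b) by (apply hc; auto).
    assert (dX (act g' x) (act g' y) <' a2).
    { eapply le_lt_trans. apply (dX_tri _ (act g0 x)); auto using act_X. rewrite (dX_sym (act g' x)) by auto using act_X.
      eapply lt_le_trans; [apply lt_add; eauto|]. auto. }
    eapply lt_asym; eauto.
Qed.

Lemma lt_helper p q a : p <' q +' (p +' -' a) -> a <' q.
Proof. intro h. apply (lt_add_r _ _ a) in h. rewrite <- add_assoc, add_Kr in h.
  rewrite (add_comm p a) in h. apply lt_add_r_iff in h. auto. Qed.
Lemma add_sub_cancel p b : p +' (b +' -' p) = b.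
Proof. rewrite add_comm. apply add_Kr. Qed.

Definition Tord (s : list M) := exists a b, s = [a; b] /\ a <' b.
Definition Bord (t q : list M) := exists a b y, t = [a; b] /\ q = [y] /\ a <' y /\ y <' b.
Lemma ord_top : def_top_space D 1 (fun s => length s = 1) 2 Tord Bord.
Proof.
  pose proof DRlt.
  split. destruct HD as [_ [_ [h _]]]; apply h. split. destruct HD as [_ [_ [_ [_ [_ [_ [_ [_ [_ [_ [h _]]]]]]]]]]]; apply h.
  split.
  { apply (D_of_Rb [1; 1; 1] _ (fun env => match env with [w1; w2; w3] => exists a b y, w1 = [a] /\ w2 = [b] /\ w3 = [y] /\
       a <' b /\ a <' y /\ y <' b | _ => False end)).
    - apply Def_Rb with (F := FAnd (FLt (TV 0) (TV 1)) (FAnd (FLt (TV 0) (TV 2)) (FLt (TV 2) (TV 1)))). wf_tac.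
      intros env le. destruct env as [|w1 [|w2 [|w3 [|? ?]]]]; simpl in le; try discriminate.
      injection le as l1 l2 l3. destruct (len1 _ w1 l1) as [a ->]. destruct (len1 _ w2 l2) as [b ->]. destruct (len1 _ w3 l3) as [y ->].
      simpl. rewrite !Rlt_iff. split. intros; exists a, b, y; tauto.
      intros [a' [b' [y' [e1 [e2 [e3 h]]]]]]. injection e1 as ->. injection e2 as ->. injection e3 as ->. tauto.
    - intros env le. destruct env as [|w1 [|w2 [|w3 [|? ?]]]]; simpl in le; try discriminate.
      injection le as l1 l2 l3. destruct (len1 _ w1 l1) as [a ->]. destruct (len1 _ w2 l2) as [b ->]. destruct (len1 _ w3 l3) as [y ->].
      simpl. unfold Tord, Bord. split.
      + intros [a' [b' [y' [e1 [e2 [e3 [h1 [h2 h3]]]]]]]]. injection e1 as ->. injection e2 as ->. injection e3 as ->.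
        split; eauto. exists a', b', y'; auto.
      + intros [[a' [b' [e1 h1]]] [a'' [b'' [y' [e2 [e3 [h2 h3]]]]]]]. injection e1 as -> ->. injection e2 as -> ->. injection e3 as ->.
        exists a'', b'', y'; repeat split; auto.
    - intros s [[a [b [e1 _]]] [a' [b' [y [e2 [e3 _]]]]]].
      assert (HL : length s = length (firstn 2 s) + length (skipn 2 s)) by (rewrite <- length_app, firstn_skipn; auto).
      rewrite HL, e1, e3. reflexivity. }
  split. intros t q _ [a [b [y [_ [-> _]]]]]. reflexivity.
  split. intros q lq. destruct (len1 _ q lq) as [y ->]. destruct (noend y) as [a [b [h1 h2]]].
    exists [a; b]. split. exists a, b; split; auto. eapply lt_trans; eauto. exists a, b, y; auto.
  intros t1 t2 q [a1 [b1 [-> h1]]] [a2 [b2 [-> h2]]] [a1' [b1' [y [e1 [-> [h3 h4]]]]]] [a2' [b2' [y' [e2 [e3 [h5 h6]]]]]].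
  injection e1 as <- <-. injection e2 as <- <-. injection e3 as <-.
  destruct (le_total a1 a2) as [ha|ha]; destruct (le_total b1 b2) as [hb|hb];
  [exists [a2; b1] | exists [a2; b2] | exists [a1; b1] | exists [a1; b2]];
  (split; [eexists; eexists; split; [reflexivity|]; eapply lt_trans; eauto|]);
  (split; [eexists; eexists; exists y; repeat split; eauto|]);
  intros q' [a' [b' [y'' [e4 [-> [h7 h8]]]]]]; injection e4 as <- <-;
  split; eexists; eexists; exists y''; repeat split; eauto using le_lt_trans, lt_le_trans.
Qed.

Lemma pi_orbit x1 x2 : X x1 -> X x2 -> pi x1 = pi x2 -> exists g, G g /\ x1 = act g x2.
Proof.
  intros h1 h2 hp. apply phi_zero; auto.
  destruct HQ as [_ [_ [_ [_ [_ [_ U]]]]]].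
  destruct (U 1 (fun s => length s = 1) 2 Tord Bord (fun x => [phi x x2])) as [psi [_ [_ [_ hpsi]]]].
  - apply ord_top.
  - unfold def_fun. assert (E : n + 1 = sumn [n; 1]) by (simpl; lia). rewrite E.
    pose proof Dphi. pose proof (X_len _ h2).
    apply (D_of_Rb [n; 1] _ (fun env => match env with [x; w] => X x /\ w = [phi x x2] | _ => False end)).
    + apply Def_Rb with (F := FRel (Rb Pphi [n; n; 1]) [TV 0; TC x2; TV 1]). wf_tac.
      intros env le. destruct env as [|x [|w [|? ?]]]; simpl in le; try discriminate. injection le as lx lw.
      simpl. rewrite app_nil_r, Rb3 by auto. simpl. tauto.
    + intros env le. destruct env as [|x [|w [|? ?]]]; simpl in le; try discriminate. injection le as lx lw.
      simpl. rewrite app_nil_r, firstn_app_ex, skipn_app_ex by auto. tauto.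
    + intros s [hx hs]. assert (HL : length s = length (firstn n s) + length (skipn n s)) by (rewrite <- length_app, firstn_skipn; auto).
      rewrite HL, hs, (X_len _ hx). simpl. lia.
  - intros; reflexivity.
  - intros x t hx [a [b [-> hab]]] [a' [b' [y [e1 [e2 [h3 h4]]]]]]. injection e1 as <- <-. injection e2 as <-.
    apply sub_pos in h3. apply sub_pos in h4. destruct (pos_min _ _ h3 h4) as [r [hr [hr1 hr2]]].
    destruct (dp_cont x r hx hr) as [del [hdel hc]]. exists del. split; auto. intros y hy hxy.
    specialize (hc y hy hxy). exists a, b, (phi y x2). repeat split; auto.
    + apply (lt_helper (phi x x2)). eapply le_lt_trans. apply (phi_lip y x x2); auto. rewrite dp_sym by auto.
      eapply lt_le_trans. apply le_lt_add; [apply le_refl|exact hc]. apply le_add_l; auto.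
    + eapply le_lt_trans. apply (phi_lip x y x2); auto. eapply lt_le_trans. apply le_lt_add; [apply le_refl|exact hc].
      eapply le_trans. apply le_add_l, hr2. rewrite add_sub_cancel. apply le_refl.
  - intros g x hg hx. rewrite phi_inv_l; auto.
  - pose proof (hpsi x1 h1) as a1. pose proof (hpsi x2 h2) as a2. rewrite hp, <- a2, phi_self in a1 by auto.
    injection a1; auto.
Qed.

Definition rep q := epsilon (inhabits []) (fun x => X x /\ pi x = q).
Lemma rep_spec q : Q q -> X (rep q) /\ pi (rep q) = q.
Proof. intro hq. unfold rep. apply epsilon_spec. apply pi_surj; auto. Qed.
Definition dQ q1 q2 := phi (rep q1) (rep q2).
Lemma phi_fiber_l x x' y : X x -> X x' -> X y -> pi x = pi x' -> phi x y = phi x' y.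
Proof. intros hx hx' hy hp. destruct (pi_orbit x x' hx hx' hp) as [g [hg ->]]. apply phi_inv_l; auto. Qed.
Lemma phi_fiber x x' y y' : X x -> X x' -> X y -> X y' -> pi x = pi x' -> pi y = pi y' -> phi x y = phi x' y'.
Proof. intros. rewrite (phi_fiber_l x x' y), (phi_sym x' y), (phi_fiber_l y y' x'), phi_sym; auto. Qed.
Lemma dQ_pi x y : X x -> X y -> dQ (pi x) (pi y) = phi x y.
Proof. intros hx hy. unfold dQ. destruct (rep_spec (pi x)) as [h1 h2]; auto using pi_Q.
  destruct (rep_spec (pi y)) as [h3 h4]; auto using pi_Q. apply phi_fiber; auto. Qed.
Lemma dQ_metric : is_metric O Q dQ.
Proof.
  intros q1 q2 q3 h1 h2 h3. destruct (rep_spec q1 h1) as [x1 p1]. destruct (rep_spec q2 h2) as [x2 p2].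
  destruct (rep_spec q3 h3) as [x3 p3]. unfold dQ. split; [|split; [|split]].
  - apply phi_nonneg; auto.
  - split. intro hz. destruct (phi_zero _ _ x1 x2 hz) as [g [hg hq]]. rewrite <- p1, <- p2, hq, pi_inv; auto.
    intros <-. apply phi_self; auto.
  - apply phi_sym; auto.
  - apply phi_tri; auto.
Qed.
Lemma dQ_self q : Q q -> dQ q q = z.
Proof. intro h. apply (proj1 (proj2 (dQ_metric q q q h h h))); auto. Qed.
Lemma dQ_tri q1 q2 q3 : Q q1 -> Q q2 -> Q q3 -> dQ q1 q3 <=' dQ q1 q2 +' dQ q2 q3.
Proof. intros. apply (dQ_metric q1 q2 q3); auto. Qed.

Definition PdQ (env : list (list M)) := match env with [q1; q2; w] => Q q1 /\ Q q2 /\ w = [dQ q1 q2] | _ => False end.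
Lemma DdQ : Def (sumn [k; k; 1]) (Rb PdQ [k; k; 1]).
Proof.
  pose proof DQ. pose proof Dpi. pose proof Dphi.
  apply Def_Rb with (F := FAnd (FRel Q [TV 0]) (FAnd (FRel Q [TV 1]) (FEx n (FEx n (FAnd (FRel (Rb Ppi [n; k]) [TV 3; TV 0])
     (FAnd (FRel (Rb Ppi [n; k]) [TV 4; TV 1]) (FRel (Rb Pphi [n; n; 1]) [TV 3; TV 4; TV 2]))))))). wf_tac.
  intros env le. destruct env as [|q1 [|q2 [|w [|? ?]]]]; simpl in le; try discriminate.
  injection le as l1 l2 lw. simpl. rewrite ?app_nil_r. split.
  - intros [hq1 [hq2 [x [lx [y [ly [ha [hb hc]]]]]]]]. rewrite ?app_nil_r in *.
    rewrite Rb2 in ha, hb by auto. rewrite Rb3 in hc by auto. simpl in ha, hb, hc.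
    destruct ha as [hx ->]. destruct hb as [hy ->]. destruct hc as [_ [_ ->]]. rewrite dQ_pi; auto.
  - intros [hq1 [hq2 ->]]. split; auto. split; auto. destruct (rep_spec q1 hq1) as [x1 p1]. destruct (rep_spec q2 hq2) as [x2 p2].
    exists (rep q1). split. apply X_len; auto. exists (rep q2). split. apply X_len; auto.
    rewrite ?app_nil_r, !Rb2 by (auto using X_len). rewrite Rb3 by (auto using X_len). simpl. repeat split; auto.
Qed.

Lemma dQ_def : def_fun2 D k k 1 Q Q (fun a b => [dQ a b]).
Proof.
  unfold def_fun2. assert (E : k + k + 1 = sumn [k; k; 1]) by (simpl; lia). rewrite E.
  apply (D_of_Rb [k; k; 1] _ PdQ). apply DdQ.
  - intros env le. destruct env as [|q1 [|q2 [|w [|? ?]]]]; simpl in le; try discriminate.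
    injection le as l1 l2 lw. simpl. rewrite app_nil_r, firstn_app_ex, skipn_app_ex, firstn_app_ex by auto.
    rewrite app_assoc, skipn_app_ex by (rewrite length_app; lia). tauto.
  - intros s [h1 [h2 h3]]. assert (HL : length s = length (firstn (k + k) s) + length (skipn (k + k) s)) by (rewrite <- length_app, firstn_skipn; auto).
    rewrite HL, h3. simpl. rewrite length_firstn.
    assert (length s >= k + k). { rewrite <- (firstn_skipn k s), length_app, (Q_len _ h1). 
      pose proof (Q_len _ h2). rewrite length_firstn in H. lia. }
    lia.
Qed.

Definition TB (t : list M) := exists q eps, t = q ++ [eps] /\ Q q /\ z <' eps.
Definition BB (t q' : list M) := exists q eps, t = q ++ [eps] /\ Q q' /\ dQ q q' <' eps.
Lemma DQraw : D k Q. Proof. apply HQ. Qed.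
Lemma ball_top : def_top_space D k Q (k + 1) TB BB.
Proof.
  pose proof DQ. pose proof DRlt. pose proof DdQ.
  split. apply DQraw. split.
  { assert (E : k + 1 = sumn [k; 1]) by (simpl; lia). rewrite E.
    apply (D_of_Rb [k; 1] _ (fun env => match env with [q; w] => Q q /\ exists eps, w = [eps] /\ z <' eps | _ => False end)).
    - apply Def_Rb with (F := FAnd (FRel Q [TV 0]) (FLt (TC [z]) (TV 1))). wf_tac.
      intros env le. destruct env as [|q [|w [|? ?]]]; simpl in le; try discriminate. injection le as lq lw.
      destruct (len1 _ w lw) as [v ->]. simpl. rewrite ?app_nil_r, Rlt_iff. split. intros [a b]; eauto.
      intros [a [eps [ev b]]]. injection ev as ->. auto.
    - intros env le. destruct env as [|q [|w [|? ?]]]; simpl in le; try discriminate. injection le as lq lw.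
      destruct (len1 _ w lw) as [v ->]. simpl. rewrite ?app_nil_r. unfold TB. split.
      intros [hq [eps [ev he]]]. injection ev as ->. eauto.
      intros [q0 [eps [ev [hq he]]]]. apply app_inj_tail in ev. destruct ev as [-> ->]. eauto.
    - intros s [q [eps [-> [hq _]]]]. rewrite length_app, (Q_len _ hq). simpl. lia. }
  split.
  { assert (E : k + 1 + k = sumn [k; 1; k]) by (simpl; lia). rewrite E.
    apply (D_of_Rb [k; 1; k] _ (fun env => match env with [q; w; q'] => Q q /\ exists eps, w = [eps] /\ z <' eps /\ Q q' /\ dQ q q' <' eps | _ => False end)).
    - apply Def_Rb with (F := FAnd (FRel Q [TV 0]) (FAnd (FLt (TC [z]) (TV 1)) (FAnd (FRel Q [TV 2])
        (FEx 1 (FAnd (FRel (Rb PdQ [k; k; 1]) [TV 0; TV 2; TV 3]) (FLt (TV 3) (TV 1))))))). wf_tac.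
      intros env le. destruct env as [|q [|w [|q' [|? ?]]]]; simpl in le; try discriminate. injection le as lq lw lq'.
      destruct (len1 _ w lw) as [v ->]. simpl. rewrite ?app_nil_r, Rlt_iff. split.
      + intros [hq [he [hq' [r [lr [h1 h2]]]]]]. destruct (len1 _ r lr) as [rv ->]. rewrite Rb3 in h1 by auto.
        simpl in h1, h2. rewrite Rlt_iff in h2. destruct h1 as [_ [_ ev]]. injection ev as ->. split; auto. exists v; auto.
      + intros [hq [eps [ev [he [hq' hd]]]]]. injection ev as ->. split; auto. split; auto. split; auto.
        exists [dQ q q']. split; auto. rewrite Rb3 by auto. simpl. split; auto. apply Rlt_iff; auto.
    - intros env le. destruct env as [|q [|w [|q' [|? ?]]]]; simpl in le; try discriminate. injection le as lq lw lq'.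
      destruct (len1 _ w lw) as [v ->]. simpl. rewrite ?app_nil_r.
      replace (q ++ v :: q') with ((q ++ [v]) ++ q') by (rewrite <- app_assoc; auto).
      rewrite firstn_app_ex, skipn_app_ex by (rewrite length_app; simpl; lia). unfold TB, BB. split.
      + intros [hq [eps [ev [he [hq' hd]]]]]. injection ev as ->. split. exists q, eps; auto. exists q, eps; auto.
      + intros [[q0 [eps [ev [hq he]]]] [q1 [eps1 [ev1 [hq' hd]]]]]. apply app_inj_tail in ev. destruct ev as [<- <-].
        apply app_inj_tail in ev1. destruct ev1 as [<- <-]. split; auto. exists v; auto.
    - intros s [[q [eps [e1 [hq _]]]] [q1 [eps1 [_ [hq' _]]]]].
      assert (HL : length s = length (firstn (k + 1) s) + length (skipn (k + 1) s)) by (rewrite <- length_app, firstn_skipn; auto).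
      rewrite HL, e1, length_app, (Q_len _ hq), (Q_len _ hq'). simpl. lia. }
  split. intros t q _ [q0 [eps [_ [hq _]]]]; auto.
  split. intros q hq. exists (q ++ [c]). split. exists q, c; auto using c_pos. exists q, c. rewrite dQ_self; auto using c_pos.
  intros t1 t2 q [q1 [e1 [-> [hq1 he1]]]] [q2 [e2 [-> [hq2 he2]]]] [q1' [e1' [ev1 [hq hd1]]]] [q2' [e2' [ev2 [_ hd2]]]].
  apply app_inj_tail in ev1. destruct ev1 as [<- <-]. apply app_inj_tail in ev2. destruct ev2 as [<- <-].
  apply sub_pos in hd1. apply sub_pos in hd2. destruct (pos_min _ _ hd1 hd2) as [r [hr [hr1 hr2]]].
  exists (q ++ [r]). split. exists q, r; auto. split. exists q, r. rewrite dQ_self; auto.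
  intros q' [q3 [r3 [ev [hq' hd]]]]. apply app_inj_tail in ev. destruct ev as [<- <-].
  split.
  - exists q1, e1. split; auto. split; auto. eapply le_lt_trans. apply (dQ_tri q1 q q'); auto.
    eapply lt_le_trans. apply le_lt_add; [apply le_refl | exact hd]. eapply le_trans. apply le_add_l, hr1.
    rewrite add_sub_cancel. apply le_refl.
  - exists q2, e2. split; auto. split; auto. eapply le_lt_trans. apply (dQ_tri q2 q q'); auto.
    eapply lt_le_trans. apply le_lt_add; [apply le_refl | exact hd]. eapply le_trans. apply le_add_l, hr2.
    rewrite add_sub_cancel. apply le_refl.
Qed.

Theorem main_thm : exists dQ' : list M -> list M -> M,
    definable_metric_space O D k Q dQ' /\
    (forall S : list M -> Prop, (forall q, S q -> Q q) ->
       (topen Q TQ BQ S <-> mopen O Q dQ' S)).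
Proof.
  exists dQ. split. split; [apply DQraw | split; [apply dQ_def | apply dQ_metric]].
  intros S hS. split.
  - intros [_ hop]. split; auto. intros q hq. destruct (hop q hq) as [t [ht [hbt hsub]]].
    destruct (rep_spec q (hS q hq)) as [hx hpx].
    destruct HQ as [_ [_ [_ [_ [_ [hcont _]]]]]].
    destruct (hcont (rep q) t hx ht) as [eps [he h]]. rewrite hpx; auto.
    destruct (pos_min _ _ he c_pos) as [r [hr [hr1 hr2]]]. exists r. split; auto.
    intros q' hq' hd. destruct (rep_spec q' hq') as [hy hpy]. unfold dQ in hd.
    destruct (phi_apx _ _ r hx hy hd) as [g [hg hdp]].
    assert (dX (rep q) (act g (rep q')) <' eps).
    { eapply lt_le_trans; [|exact hr1]. apply not_le_lt. intro hle. assert (r <=' dp (rep q) (act g (rep q'))) by (apply dp_ge; auto using act_X).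
      apply le_not_lt in H; auto. }
    apply hsub. rewrite <- hpy, <- (pi_inv g); auto. apply h; auto using act_X.
  - intros [_ hm]. split; auto.
    destruct HQ as [htop [hpidef [hpiQ [_ [_ [_ U]]]]]].
    destruct (U k Q (k + 1) TB BB pi ball_top hpidef hpiQ) as [psi [_ [_ [hct hpsi]]]].
    + intros x t hx [q0 [eps [-> [hq0 he]]]] [q0' [eps' [ev [hq hd]]]]. apply app_inj_tail in ev. destruct ev as [<- <-].
      apply sub_pos in hd. destruct (dp_cont x _ hx hd) as [del [hdel hc]]. exists del. split; auto.
      intros y hy hxy. exists q0, eps. split; auto. split. apply pi_Q; auto.
      eapply le_lt_trans. apply (dQ_tri q0 (pi x)); auto using pi_Q. rewrite dQ_pi by auto.
      eapply le_lt_trans. apply le_add_l, phi_le_dp; auto. eapply lt_le_trans. apply le_lt_add; [apply le_refl|apply hc; auto].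
      rewrite add_sub_cancel. apply le_refl.
    + intros g x hg hx. apply pi_inv; auto.
    + assert (hid : forall q, Q q -> psi q = q).
      { intros q hq. destruct (rep_spec q hq) as [hx hp]. rewrite <- hp at 1 2. symmetry. apply hpsi; auto. }
      intros q hq. destruct (hm q hq) as [eps [he hball]].
      destruct (hct q (q ++ [eps])) as [t' [ht' [hb' hsub]]]; auto.
      { exists q, eps. auto. }
      { exists q, eps. rewrite hid by auto. split; auto. split; auto. rewrite dQ_self; auto. }
      exists t'. split; auto. split; auto. intros q' hq'.
      destruct htop as [_ [_ [_ [hBQ _]]]]. assert (Q q') by (eapply hBQ; eauto).
      destruct (hsub q' hq') as [q1 [e1 [ev [_ hd]]]]. apply app_inj_tail in ev. destruct ev as [<- <-].
      rewrite hid in hd by auto. apply hball; auto.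
Qed.
End Main.


Theorem theorem5p10 (M : Type) (O : ogroup M)
  (D : nat -> (list M -> Prop) -> Prop)
  (HO : dense_ordered_group O)
  (HD : is_structure O D)
  (Hlom : locally_o_minimal O D)
  (Hdc : definably_complete O D)
  (m : nat) (G : list M -> Prop) (dG : list M -> list M -> M)
  (mul : list M -> list M -> list M) (inv : list M -> list M) (e : list M)
  (HG : definable_metric_group O D m G dG mul inv e)
  (HGc : definably_compact_metric O D m G dG)
  (n : nat) (X : list M -> Prop) (dX : list M -> list M -> M)
  (HX : definable_metric_space O D n X dX)
  (act : list M -> list M -> list M)
  (Hact : definable_cont_action O D m G dG mul e n X dX act)
  (k : nat) (Q : list M -> Prop) (l : nat) (TQ : list M -> Prop)
  (BQ : list M -> list M -> Prop) (pi : list M -> list M)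
  (HQ : is_definable_quotient O D m G n X dX act k Q l TQ BQ pi) :
  exists dQ : list M -> list M -> M,
    definable_metric_space O D k Q dQ /\
    (forall S : list M -> Prop, (forall q, S q -> Q q) ->
       (topen Q TQ BQ S <-> mopen O Q dQ S)).
Proof.
  eapply main_thm; eassumption.
Qed.
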